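(* Let $j^\star=\left\lfloor-\frac{\log(1-\lambda)}{\log(\lambda d+1)}\right\rfloor$ and assume $I>j^\star$. There exists a unique fixed point $x^\star$. It satisfies $x^\star_{\cdot,j^\star}+x^\star_{\cdot,j^\star+1}=1$ (so $x^\star_{i,j}=0$ whenever $j\notin\{j^\star,j^\star+1\}$), and $$\lambda d\,x^\star_{0,j^\star}=(1+\lambda d)(1-\lambda)-\frac{1}{(1+\lambda d)^{j^\star}},\qquad x^\star_{0,j^\star}+x^\star_{0,j^\star+1}=1-\lambda.$$
   Context: Fix $\lambda\in(0,1)$, an integer $d\ge2$ and an integer $I>1$. $\mathcal S=\{x=(x_{i,j})_{0\le i\le j\le I}: x_{i,j}\ge0,\ \sum_{i=0}^I\sum_{j=i}^I x_{i,j}=1\}$; $x_{i,\cdot}=\sum_{j=i}^I x_{i,j}$, $x_{\cdot,j}=\sum_{i=0}^j x_{i,j}$. For $0\le j\le I$: $\mathcal R_j(x)=\max\{0,\lambda(1-d\sum_{i=0}^j(j+1-i)x_{i,\cdot})\}\,\mathbf 1\{\sum_{i=0}^j x_{\cdot,i}=0\}$, $\mathcal G_j(x)=\lambda d\,\mathbf 1\{\sum_{i=0}^j x_{\cdot,i}=0,\ d\sum_{i=0}^j(j+1-i)x_{i,\cdot}\le1\}\sum_{i=0}^j x_{i,\cdot}$. Write $\rho_k^{a,b}(x)=\mathcal R_k(x)\frac{x_{a,b}}{x_{\cdot,b}}\mathbf 1\{x_{\cdot,b}>0\}$ (equal to $0$ when $x_{\cdot,b}=0$). The drift $b(x)$ is: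 $b_{0,0}=\lambda d(x_{0,\cdot}-x_{0,0})-\lambda+\mathcal R_0(x)$; for $i<j$: $b_{i,j}=x_{i+1,j}-\mathbf 1\{i>0\}x_{i,j}-\lambda d x_{i,j}-\rho_{j-1}^{i,j}+\mathbf 1\{i>0\}\rho_{j-2}^{i-1,j-1}+\mathbf 1\{j=I,i>0\}\rho_{I-1}^{i-1,I}$; $b_{1,1}=-x_{1,1}+\lambda d(x_{1,\cdot}-x_{1,1})+\lambda-\mathcal R_0(x)-\rho_0^{1,1}-\mathcal G_1(x)$; for $2\le i\le I-1$: $b_{i,i}=-x_{i,i}+\lambda d(x_{i,\cdot}-x_{i,i})-\rho_{i-1}^{i,i}+\rho_{i-2}^{i-1,i-1}+\mathcal G_{i-1}(x)-\mathcal G_i(x)$; $b_{I,I}=-x_{I,I}+\rho_{I-2}^{I-1,I-1}+\mathcal G_{I-1}(x)+\rho_{I-1}^{I-1,I}$. A fluid solution is an absolutely continuous $x:\mathbb R_+\to\mathcal S$ with $\dot x_{i,j}(t)=b_{i,j}(x(t))$ for a.e. $t$ and all $i\le j$. A fixed point is a fluid solution with $b(x(t))=0$ for all $t\ge0$ (hence constant, identified with a point of $\mathcal S$). *)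

(* Defs.v *)
From Stdlib Require Import Reals Lra Lia ZArith Arith List Bool.
Open Scope bool_scope.
Open Scope R_scope.

(* A state x is represented as a function nat -> nat -> R; only the entries
   x i j with 0 <= i <= j <= I are meaningful. *)
Definition state := nat -> nat -> R.

(* rsum m n f = sum_{k=m}^{n} f k  (empty, i.e. 0, if m > n) *)
Definition rsum (m n : nat) (f : nat -> R) : R :=
  fold_right Rplus 0 (map f (seq m (S n - m))).

Definition ind (b : bool) : R := if b then 1 else 0.
Definition is0 (r : R) : bool := if Req_dec_T r 0 then true else false.
Definition isle (r s : R) : bool := if Rle_dec r s then true else false.
Definition ispos (r : R) : bool := if Rlt_dec 0 r then true else false.

Section Model.
Variables (lam : R) (d I : nat) (x : state).
Let dR := INR d.

Definition row (i : nat) : R := rsum i I (fun j => x i j).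
Definition col (j : nat) : R := rsum 0 j (fun i => x i j).

Definition wsum (j : nat) : R := rsum 0 j (fun i => INR (j + 1 - i)%nat * row i).
Definition csum (j : nat) : R := rsum 0 j (fun i => col i).

Definition Rj (j : nat) : R :=
  Rmax 0 (lam * (1 - dR * wsum j)) * ind (is0 (csum j)).

Definition Gj (j : nat) : R :=
  lam * dR * ind (is0 (csum j) && isle (dR * wsum j) 1) * rsum 0 j row.

Definition rho (k a b : nat) : R :=
  if ispos (col b) then Rj k * x a b / col b else 0.

Definition drift (i j : nat) : R :=
  if (i =? 0)%nat && (j =? 0)%nat then
    lam * dR * (row 0%nat - x 0%nat 0%nat) - lam + Rj 0%nat
  else if (Nat.ltb i j) then
    x (S i) j - ind (Nat.ltb 0 i) * x i j - lam * dR * x i j - rho (j - 1)%nat i j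
    + ind (Nat.ltb 0 i) * rho (j - 2)%nat (i - 1)%nat (j - 1)%nat
    + ind ((j =? I)%nat && Nat.ltb 0 i) * rho (I - 1)%nat (i - 1)%nat I
  else if (i =? 1)%nat && (j =? 1)%nat then
    - x 1%nat 1%nat + lam * dR * (row 1%nat - x 1%nat 1%nat) + lam - Rj 0%nat
    - rho 0%nat 1%nat 1%nat - Gj 1%nat
  else if (i =? j)%nat && (2 <=? i)%nat && (i <=? I - 1)%nat then
    - x i i + lam * dR * (row i - x i i) - rho (i - 1)%nat i i
    + rho (i - 2)%nat (i - 1)%nat (i - 1)%nat + Gj (i - 1)%nat - Gj i
  else if (i =? I)%nat && (j =? I)%nat then
    - x I I + rho (I - 2)%nat (I - 1)%nat (I - 1)%nat + Gj (I - 1)%nat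
    + rho (I - 1)%nat (I - 1)%nat I
  else 0.

Definition InS : Prop :=
  (forall i j : nat, (i <= j <= I)%nat -> 0 <= x i j) /\
  rsum 0 I (fun i => rsum i I (fun j => x i j)) = 1.

(* x is a fixed point: x in S and b(x) = 0 (a constant fluid solution). *)
Definition fixed_point : Prop :=
  InS /\ forall i j : nat, (i <= j <= I)%nat -> drift i j = 0.
End Model.

Definition jstar (lam : R) (d : nat) : nat :=
  Z.to_nat (Int_part (- ln (1 - lam) / ln (lam * INR d + 1))).

(* Main.v *)
From Stdlib Require Import Reals Lra Lia ZArith Arith List Bool Classical.
Require Import Defs.
Open Scope R_scope.

Lemma rsum_nil m n f : (n < m)%nat -> rsum m n f = 0.
Proof. intros H. unfold rsum. replace (S n - m)%nat with 0%nat by lia. reflexivity. Qed.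

Lemma rsum_cons m n f : (m <= n)%nat -> rsum m n f = f m + rsum (S m) n f.
Proof. intros H. unfold rsum. replace (S n - m)%nat with (S (S n - S m)) by lia.
  reflexivity. Qed.

Lemma rsum_single m f : rsum m m f = f m.
Proof. rewrite rsum_cons by lia. rewrite rsum_nil by lia. ring. Qed.

Lemma rsum_last m n f : (m <= S n)%nat -> rsum m (S n) f = rsum m n f + f (S n).
Proof.
  intros H. remember (S n - m)%nat as k eqn:Hk. revert m H Hk.
  induction k; intros m H Hk;
  destruct (Nat.eq_dec m (S n)) as [->|Hne]; try lia.
  - rewrite rsum_single, rsum_nil by lia. ring.
  - rewrite rsum_cons by lia. rewrite (rsum_cons m n) by lia.
    rewrite IHk by lia. ring.
Qed.

Lemma rsum_ext m n f g : (forall k, (m <= k <= n)%nat -> f k = g k) -> rsum m n f = rsum m n g.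
Proof.
  intros H. unfold rsum. f_equal. apply map_ext_in. intros k Hk.
  apply in_seq in Hk. apply H. lia.
Qed.

Lemma rsum_ind_n (P : nat -> Prop) m : (forall n, (n < m)%nat -> P n) -> P m -> (forall n, (m <= n)%nat -> P n -> P (S n)) -> forall n, P n.
Proof. intros H0 H1 H2 n. induction n. destruct m. auto. apply H0; lia.
  destruct (Nat.lt_ge_cases (S n) m). apply H0; lia.
  destruct (Nat.eq_dec (S n) m) as [<-|]. auto. apply H2; [lia|]. auto. Qed.

Lemma rsum_plus m n f g : rsum m n (fun k => f k + g k) = rsum m n f + rsum m n g.
Proof.
  induction n as [|n IH].
  - destruct m. rewrite !rsum_single. ring. rewrite !rsum_nil by lia. ring.
  - destruct (le_lt_dec m (S n)). rewrite !rsum_last by lia. rewrite IH. ring.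
    rewrite !rsum_nil by lia. ring.
Qed.

Lemma rsum_scal m n c f : rsum m n (fun k => c * f k) = c * rsum m n f.
Proof.
  induction n as [|n IH].
  - destruct m. rewrite !rsum_single. ring. rewrite !rsum_nil by lia. ring.
  - destruct (le_lt_dec m (S n)). rewrite !rsum_last by lia. rewrite IH. ring.
    rewrite !rsum_nil by lia. ring.
Qed.

Lemma rsum_zero m n f : (forall k, (m <= k <= n)%nat -> f k = 0) -> rsum m n f = 0.
Proof.
  intros H. rewrite (rsum_ext m n f (fun k => 0 * f k)).
  rewrite rsum_scal. ring. intros k Hk. rewrite H by lia. ring.
Qed.

Lemma rsum_nonneg m n f : (forall k, (m <= k <= n)%nat -> 0 <= f k) -> 0 <= rsum m n f.
Proof.
  induction n as [|n IH]; intros H.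
  - destruct m. rewrite rsum_single. apply H; lia. rewrite rsum_nil by lia. lra.
  - destruct (le_lt_dec m (S n)). rewrite rsum_last by lia.
    assert (0 <= f (S n)) by (apply H; lia).
    assert (0 <= rsum m n f) by (apply IH; intros; apply H; lia). lra.
    rewrite rsum_nil by lia. lra.
Qed.

Lemma rsum_ge_term m n f p : (forall k, (m <= k <= n)%nat -> 0 <= f k) -> (m <= p <= n)%nat ->
  f p <= rsum m n f.
Proof.
  induction n as [|n IH]; intros H Hp.
  - assert (m = 0 /\ p = 0)%nat as [-> ->] by lia. rewrite rsum_single. lra.
  - rewrite rsum_last by lia. destruct (Nat.eq_dec p (S n)) as [->|].
    + assert (0 <= rsum m n f) by (apply rsum_nonneg; intros; apply H; lia). lra.
    + assert (f p <= rsum m n f) by (apply IH; [intros; apply H; lia| lia]).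
      assert (0 <= f (S n)) by (apply H; lia). lra.
Qed.

Lemma rsum_eq0_inv m n f : (forall k, (m <= k <= n)%nat -> 0 <= f k) -> rsum m n f = 0 ->
  forall k, (m <= k <= n)%nat -> f k = 0.
Proof.
  intros H Hs k Hk. pose proof (rsum_ge_term m n f k H Hk). pose proof (H k Hk). lra.
Qed.

Lemma rsum_delta m n p c : rsum m n (fun k => if (k =? p)%nat then c else 0) =
  if ((m <=? p) && (p <=? n))%nat then c else 0.
Proof.
  induction n as [|n IH].
  - destruct m.
    + rewrite rsum_single. destruct p; simpl; reflexivity.
    + rewrite rsum_nil by lia. destruct (Nat.leb_spec (S m) p); destruct (Nat.leb_spec p 0); simpl; auto; lia.
  - destruct (le_lt_dec m (S n)).
    + rewrite rsum_last by lia. rewrite IH.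
      destruct (Nat.eqb_spec (S n) p); destruct (Nat.leb_spec m p); destruct (Nat.leb_spec p n);
        destruct (Nat.leb_spec p (S n)); simpl; try lia; try ring.
    + rewrite rsum_nil by lia. destruct (Nat.leb_spec m p); destruct (Nat.leb_spec p (S n)); simpl; try lia; auto.
Qed.

Lemma rsum_trunc f n K : (K <= n)%nat -> (forall k, (K < k <= n)%nat -> f k = 0) -> rsum 0 n f = rsum 0 K f.
Proof.
  induction n; intros HK Hz. replace K with 0%nat by lia. reflexivity.
  destruct (Nat.eq_dec K (S n)) as [->|]. reflexivity.
  rewrite rsum_last by lia. rewrite Hz by lia. rewrite IHn; [ring | lia | intros; apply Hz; lia].
Qed.

Lemma rsum_two m n p q f : p <> q -> (forall k, (m <= k <= n)%nat -> k <> p -> k <> q -> f k = 0) ->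
  rsum m n f = (if ((m <=? p) && (p <=? n))%nat then f p else 0) + (if ((m <=? q) && (q <=? n))%nat then f q else 0).
Proof.
  intros Hpq Hz. rewrite (rsum_ext m n f (fun k => (if (k =? p)%nat then f p else 0) + (if (k =? q)%nat then f q else 0))).
  rewrite rsum_plus, !rsum_delta. reflexivity.
  intros k Hk. destruct (Nat.eqb_spec k p); destruct (Nat.eqb_spec k q); subst; try lia; try ring.
  rewrite Hz by auto. ring.
Qed.

Lemma is0_eq r : r = 0 -> is0 r = true.
Proof. intros ->. unfold is0. destruct (Req_dec_T 0 0); auto; congruence. Qed.
Lemma is0_neq r : r <> 0 -> is0 r = false.
Proof. intros H. unfold is0. destruct (Req_dec_T r 0); auto; congruence. Qed.
Lemma isle_t r s : r <= s -> isle r s = true.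
Proof. intros H. unfold isle. destruct (Rle_dec r s); auto; lra. Qed.
Lemma ispos_t r : 0 < r -> ispos r = true.
Proof. intros H. unfold ispos. destruct (Rlt_dec 0 r); auto; lra. Qed.
Lemma ispos_f r : ~ 0 < r -> ispos r = false.
Proof. intros H. unfold ispos. destruct (Rlt_dec 0 r); auto; lra. Qed.

Section Gen.
Variables (lam : R) (d I : nat).

Lemma rho_R0 x k a b : Rj lam d I x k = 0 -> rho lam d I x k a b = 0.
Proof. intros H. unfold rho. rewrite H. destruct (ispos (col x b)); unfold Rdiv; ring. Qed.
Lemma rho_col0 x k a b : col x b = 0 -> rho lam d I x k a b = 0.
Proof. intros H. unfold rho. rewrite ispos_f by lra. reflexivity. Qed.
Lemma rho_pos x k a b : 0 < col x b -> rho lam d I x k a b = Rj lam d I x k * x a b / col x b.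
Proof. intros H. unfold rho. rewrite ispos_t by lra. reflexivity. Qed.
Lemma Rj_pos x j : csum x j <> 0 -> Rj lam d I x j = 0.
Proof. intros H. unfold Rj. rewrite is0_neq by auto. simpl. ring. Qed.
Lemma Gj_pos x j : csum x j <> 0 -> Gj lam d I x j = 0.
Proof. intros H. unfold Gj. rewrite is0_neq by auto. simpl. ring. Qed.
Lemma Rj_zero x j : csum x j = 0 -> Rj lam d I x j = Rmax 0 (lam * (1 - INR d * wsum I x j)).
Proof. intros H. unfold Rj. rewrite is0_eq by auto. simpl. ring. Qed.
Lemma Gj_zero x j : csum x j = 0 -> Gj lam d I x j =
  lam * INR d * ind (isle (INR d * wsum I x j) 1) * rsum 0 j (row I x).
Proof. intros H. unfold Gj. rewrite is0_eq by auto. simpl. reflexivity. Qed.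

Lemma drift_00 x : drift lam d I x 0 0 =
  lam * INR d * (row I x 0 - x 0%nat 0%nat) - lam + Rj lam d I x 0.
Proof. reflexivity. Qed.

Lemma drift_lt x i j : (i < j)%nat -> drift lam d I x i j =
    x (S i) j - ind (Nat.ltb 0 i) * x i j - lam * INR d * x i j - rho lam d I x (j - 1)%nat i j
    + ind (Nat.ltb 0 i) * rho lam d I x (j - 2)%nat (i - 1)%nat (j - 1)%nat
    + ind ((j =? I)%nat && Nat.ltb 0 i) * rho lam d I x (I - 1)%nat (i - 1)%nat I.
Proof.
  intros H. unfold drift. destruct j. lia.
  replace ((i =? 0)%nat && (S j =? 0)%nat) with false by (destruct (i =? 0)%nat; reflexivity).
  rewrite (proj2 (Nat.ltb_lt i (S j)) H). reflexivity.
Qed.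

Lemma drift_11 x : drift lam d I x 1 1 =
    - x 1%nat 1%nat + lam * INR d * (row I x 1%nat - x 1%nat 1%nat) + lam - Rj lam d I x 0%nat
    - rho lam d I x 0%nat 1%nat 1%nat - Gj lam d I x 1%nat.
Proof. reflexivity. Qed.

Lemma drift_diag x i : (2 <= i)%nat -> (i <= I - 1)%nat -> drift lam d I x i i =
    - x i i + lam * INR d * (row I x i - x i i) - rho lam d I x (i - 1)%nat i i
    + rho lam d I x (i - 2)%nat (i - 1)%nat (i - 1)%nat + Gj lam d I x (i - 1)%nat - Gj lam d I x i.
Proof.
  intros H1 H2. unfold drift.
  destruct i as [|[|i]]; try lia.
  replace (Nat.ltb (S (S i)) (S (S i))) with false by (symmetry; apply Nat.ltb_irrefl).
  simpl ((S (S i) =? 0)%nat && _). simpl ((S (S i) =? 1)%nat && _).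
  rewrite Nat.eqb_refl. rewrite (proj2 (Nat.leb_le _ _) H2). reflexivity.
Qed.

Lemma drift_II x : (2 <= I)%nat -> drift lam d I x I I =
    - x I I + rho lam d I x (I - 2)%nat (I - 1)%nat (I - 1)%nat + Gj lam d I x (I - 1)%nat
    + rho lam d I x (I - 1)%nat (I - 1)%nat I.
Proof.
  intros H. unfold drift.
  destruct I as [|[|J]]; try lia.
  replace (Nat.ltb (S (S J)) (S (S J))) with false by (symmetry; apply Nat.ltb_irrefl).
  simpl ((S (S J) =? 0)%nat && _). simpl ((S (S J) =? 1)%nat && _).
  rewrite Nat.eqb_refl.
  replace (S (S J) <=? S (S J) - 1)%nat with false by (symmetry; apply Nat.leb_gt; lia).
  simpl. reflexivity.
Qed.
End Gen.

Lemma wsum_step (p : nat -> R) k :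
  rsum 0 (S k) (fun i => INR (S k + 1 - i) * p i) =
  rsum 0 k (fun i => INR (k + 1 - i) * p i) + rsum 0 (S k) p.
Proof.
  rewrite !rsum_last by lia.
  replace (INR (S k + 1 - S k)) with 1 by (replace (S k + 1 - S k)%nat with 1%nat by lia; simpl; ring).
  rewrite (rsum_ext 0 k (fun i => INR (S k + 1 - i) * p i) (fun i => INR (k + 1 - i) * p i + p i)).
  rewrite rsum_plus. ring.
  intros i Hi. replace (S k + 1 - i)%nat with (S (k + 1 - i)) by lia. rewrite S_INR. ring.
Qed.

Section Seq.
Variables (a r : R) (u v : nat -> R) (m : nat).
Hypothesis Hm1 : (1 <= m)%nat.
Hypothesis Ru0 : u 1%nat = (a + r) * u 0%nat.
Hypothesis Rui : forall i, (1 <= i <= m - 1)%nat -> u (S i) = (1 + a + r) * u i.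
Hypothesis Rv0 : v 1%nat = a * v 0%nat.
Hypothesis Rvi : forall i, (1 <= i <= m)%nat -> v (S i) = (1 + a) * v i - r * u (i - 1)%nat.

Lemma D1 k : (k <= m - 1)%nat -> u (S k) = (a + r) * rsum 0 k u.
Proof.
  induction k; intros Hk. rewrite rsum_single. auto.
  rewrite Rui by lia. rewrite rsum_last by lia. rewrite IHk by lia. ring.
Qed.

Lemma D2 k : (k <= m)%nat -> rsum 0 k u = (1 + a + r) ^ k * u 0%nat.
Proof.
  induction k; intros Hk. rewrite rsum_single. simpl; ring.
  rewrite rsum_last by lia. rewrite D1 by lia. rewrite IHk by lia. simpl. ring.
Qed.

Lemma D3 k : (1 <= k <= m)%nat -> v (S k) = a * rsum 0 k v - r * rsum 0 (k - 1) u.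
Proof.
  induction k; intros Hk. lia.
  destruct (Nat.eq_dec k 0) as [->|Hk0].
  - rewrite Rvi by lia. rewrite Rv0. rewrite rsum_last, !rsum_single by lia.
    simpl. rewrite Rv0. ring.
  - rewrite Rvi by lia. replace (S k - 1)%nat with (S (k - 1)) by lia.
    rewrite (rsum_last 0 k v) by lia.
    rewrite (rsum_last 0 (k - 1) u) by lia. replace (S (k - 1)) with k by lia.
    rewrite IHk by lia. ring.
Qed.

Lemma D4 k : (k <= m)%nat -> rsum 0 k u + rsum 0 (S k) v = (1 + a) ^ k * (u 0%nat + (1 + a) * v 0%nat).
Proof.
  induction k; intros Hk.
  - rewrite rsum_single, rsum_last, rsum_single by lia. rewrite Rv0. simpl. ring.
  - rewrite (rsum_last 0 k u) by lia. rewrite (rsum_last 0 (S k) v) by lia.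
    rewrite D3 by lia. replace (S k - 1)%nat with k by lia.
    rewrite D1 by lia.
    transitivity ((1 + a) * (rsum 0 k u + rsum 0 (S k) v)); [ring|].
    rewrite IHk by lia. simpl. ring.
Qed.


Lemma D5 k : (1 <= k <= m)%nat -> v (S k) + u k = a * (1 + a) ^ (k - 1) * (u 0%nat + (1 + a) * v 0%nat).
Proof.
  induction k; intros Hk. lia.
  destruct (Nat.eq_dec k 0) as [->|Hk0].
  - rewrite (Rvi 1) by lia. simpl. rewrite Rv0, Ru0. ring.
  - rewrite (Rvi (S k)) by lia. replace (S k - 1)%nat with k by lia.
    rewrite (Rui k) by lia.
    transitivity ((1 + a) * (v (S k) + u k)); [ring|].
    rewrite IHk by lia.
    replace k with (S (k - 1)) at 2 by lia. simpl. ring.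
Qed.

Lemma D6 (p : nat -> R) k : (forall i, (i <= m)%nat -> p i = u i + v i) -> (k <= m - 1)%nat ->
  a * rsum 0 k (fun i => INR (k + 1 - i) * p i) =
  rsum 0 (S k) u + rsum 0 (S k) v - u 0%nat - v 0%nat - r * rsum 0 k u.
Proof.
  intros Hp. induction k; intros Hk.
  - rewrite !rsum_single, !rsum_last, !rsum_single by lia. rewrite Hp by lia.
    rewrite Ru0, Rv0. simpl. ring.
  - rewrite wsum_step. rewrite Rmult_plus_distr_l. rewrite IHk by lia.
    rewrite (rsum_ext 0 (S k) p (fun i => u i + v i)) by (intros; apply Hp; lia).
    rewrite rsum_plus.
    rewrite (rsum_last 0 (S k) u) by lia. rewrite (rsum_last 0 (S k) v) by lia.
    rewrite D1 by lia. rewrite D3 by lia. replace (S k - 1)%nat with k by lia.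
    rewrite (rsum_last 0 k u) by lia. ring.
Qed.
End Seq.

Fixpoint useq (a r u0 : R) (i : nat) : R :=
  match i with
  | O => u0
  | S O => (a + r) * u0
  | S ((S k) as k1) => (1 + a + r) * useq a r u0 k1
  end.

Fixpoint vseq (a r u0 v0 : R) (i : nat) : R :=
  match i with
  | O => v0
  | S O => a * v0
  | S ((S k) as k1) => (1 + a) * vseq a r u0 v0 k1 - r * useq a r u0 k
  end.

Lemma useq_eq a r u0 (u : nat -> R) m : u 0%nat = u0 -> u 1%nat = (a + r) * u0 ->
  (forall i, (1 <= i <= m - 1)%nat -> u (S i) = (1 + a + r) * u i) ->
  forall i, (i <= m)%nat -> u i = useq a r u0 i.
Proof.
  intros H0 H1 H2. induction i; intros Hi. auto.
  destruct i. simpl. rewrite H1. ring.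
  rewrite H2 by lia. rewrite IHi by lia. reflexivity.
Qed.

Lemma vseq_eq a r u0 v0 (u v : nat -> R) m : v 0%nat = v0 -> v 1%nat = a * v0 ->
  (forall i, (1 <= i <= m)%nat -> v (S i) = (1 + a) * v i - r * u (i - 1)%nat) ->
  (forall i, (i <= m)%nat -> u i = useq a r u0 i) ->
  forall i, (i <= S m)%nat -> v i = vseq a r u0 v0 i.
Proof.
  intros H0 H1 H2 Hu. induction i; intros Hi. auto.
  destruct i. simpl. rewrite H1. ring.
  rewrite H2 by lia. rewrite IHi by lia. replace (S i - 1)%nat with i by lia.
  rewrite Hu by lia. reflexivity.
Qed.

Lemma min_exists (P : nat -> Prop) n : P n -> exists m, P m /\ forall k, (k < m)%nat -> ~ P k.
Proof.
  revert n. induction n as [n IH] using lt_wf_ind. intros Hn.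
  destruct (classic (exists k, (k < n)%nat /\ P k)) as [[k [Hk1 Hk2]]|Hno].
  - exact (IH k Hk1 Hk2).
  - exists n. split; auto. intros k Hk HP. apply Hno. eauto.
Qed.

Definition xsJ (a r u0 v0 : R) (m : nat) (i j : nat) : R :=
  if (j =? m)%nat then (if (i <=? m)%nat then useq a r u0 i else 0)
  else if (j =? S m)%nat then (if (i <=? S m)%nat then vseq a r u0 v0 i else 0) else 0.

Section EX0.
Variables (lam : R) (d I m : nat) (u0 v0 r : R).
Hypothesis Hlam : 0 < lam < 1.
Hypothesis Hd : (2 <= d)%nat.
Hypothesis Ex1 : (1 <= m)%nat.
Hypothesis ExI : (S m <= I)%nat.
Hypothesis Hu0 : 0 < u0.
Hypothesis Hv0 : 0 <= v0.
Hypothesis Hr : 0 <= r.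
Hypothesis Hsum : u0 + v0 = 1 - lam.
Hypothesis HS : (1 + lam * INR d) ^ m * (u0 + (1 + lam * INR d) * v0) = 1.
Hypothesis Hreq : (1 + r) * ((lam * INR d + r) * (1 + lam * INR d + r) ^ (m - 1) * u0) =
  lam * INR d * (1 + lam * INR d) ^ (m - 1) * (u0 + (1 + lam * INR d) * v0).

Let a := lam * INR d.
Let u := useq a r u0.
Let v := vseq a r u0 v0.
Let xs := xsJ a r u0 v0 m.

Lemma ex_a : 0 < a.
Proof. unfold a. assert (2 <= INR d) by (replace 2 with (INR 2) by (simpl; ring); apply le_INR; lia). nra. Qed.

Lemma ex_Ru0 : u 1%nat = (a + r) * u 0%nat.
Proof. reflexivity. Qed.
Lemma ex_Rui : forall i, (1 <= i <= m - 1)%nat -> u (S i) = (1 + a + r) * u i.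
Proof. intros i Hi. destruct i. lia. reflexivity. Qed.
Lemma ex_Rv0 : v 1%nat = a * v 0%nat.
Proof. reflexivity. Qed.
Lemma ex_Rvi : forall i, (1 <= i <= m)%nat -> v (S i) = (1 + a) * v i - r * u (i - 1)%nat.
Proof. intros i Hi. destruct i. lia. simpl. replace (i - 0)%nat with i by lia. reflexivity. Qed.

Lemma ex_u_pos i : 0 < u i.
Proof.
  pose proof ex_a. induction i. exact Hu0. destruct i. change (u 1%nat) with ((a + r) * u0). nra.
  change (u (S (S i))) with ((1 + a + r) * u (S i)). nra.
Qed.

Lemma ex_um : u m = (a + r) * (1 + a + r) ^ (m - 1) * u0.
Proof.
  pose proof (D1 a r u m Ex1 ex_Ru0 ex_Rui (m - 1) ltac:(lia)) as H1.
  replace (S (m - 1)) with m in H1 by lia.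
  pose proof (D2 a r u m Ex1 ex_Ru0 ex_Rui (m - 1) ltac:(lia)) as H2.
  change (u 0%nat) with u0 in H2. rewrite H1, H2. ring.
Qed.

Lemma ex_vSm : v (S m) = r * u m.
Proof.
  pose proof (D5 a r u v m Ex1 ex_Ru0 ex_Rui ex_Rv0 ex_Rvi m ltac:(lia)) as H5.
  change (u 0%nat) with u0 in H5. change (v 0%nat) with v0 in H5.
  fold a in Hreq. rewrite <- ex_um in Hreq. lra.
Qed.

Lemma ex_u_bound : forall t, (t <= m - 1)%nat ->
  u (m - t)%nat <= a * (1 + a) ^ (m - t - 1) * (u0 + (1 + a) * v0).
Proof.
  pose proof ex_a as Ha. fold a in Hreq.
  induction t; intros Ht.
  - rewrite Nat.sub_0_r. rewrite <- Hreq. rewrite <- ex_um. pose proof (ex_u_pos m).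
    assert (0 <= r * u m) by (apply Rmult_le_pos; lra). lra.
  - pose proof (IHt ltac:(lia)) as IH.
    replace (m - t)%nat with (S (m - S t)) in IH by lia.
    rewrite ex_Rui in IH by lia.
    replace (S (m - S t) - 1)%nat with (S (m - S t - 1)) in IH by lia.
    simpl pow in IH. pose proof (ex_u_pos (m - S t)).
    assert (0 <= a * (1 + a) ^ (m - S t - 1) * (u0 + (1 + a) * v0)).
    { apply Rmult_le_pos. apply Rmult_le_pos. lra. apply pow_le; lra. nra. }
    nra.
Qed.

Lemma ex_v_nn i : (i <= S m)%nat -> 0 <= v i.
Proof.
  pose proof ex_a as Ha. intros Hi.
  destruct i. exact Hv0. destruct i. change (v 1%nat) with (a * v0). nra.
  pose proof (D5 a r u v m Ex1 ex_Ru0 ex_Rui ex_Rv0 ex_Rvi (S i) ltac:(lia)) as H5.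
  change (u 0%nat) with u0 in H5. change (v 0%nat) with v0 in H5.
  pose proof (ex_u_bound (m - S i) ltac:(lia)) as HB.
  replace (m - (m - S i))%nat with (S i) in HB by lia.
  replace (S i - 1)%nat with (S i - 1)%nat in HB by lia. lra.
Qed.

Lemma ex_xs_nn i j : (i <= j <= I)%nat -> 0 <= xs i j.
Proof.
  intros H. unfold xs, xsJ.
  destruct (j =? m)%nat. destruct (i <=? m)%nat. apply Rlt_le, ex_u_pos. lra.
  destruct (j =? S m)%nat eqn:E. destruct (i <=? S m)%nat eqn:E2.
  apply ex_v_nn. apply Nat.leb_le; auto. lra. lra.
Qed.

Lemma ex_xs_m i : (i <= m)%nat -> xs i m = u i.
Proof. intros. unfold xs, xsJ. rewrite Nat.eqb_refl. replace (i <=? m)%nat with true by (symmetry; apply Nat.leb_le; auto). reflexivity. Qed.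
Lemma ex_xs_Sm i : (i <= S m)%nat -> xs i (S m) = v i.
Proof. intros. unfold xs, xsJ. replace (S m =? m)%nat with false by (symmetry; apply Nat.eqb_neq; lia).
  rewrite Nat.eqb_refl. replace (i <=? S m)%nat with true by (symmetry; apply Nat.leb_le; auto). reflexivity. Qed.
Lemma ex_xs_0 i j : j <> m -> j <> S m -> xs i j = 0.
Proof. intros. unfold xs, xsJ. replace (j =? m)%nat with false by (symmetry; apply Nat.eqb_neq; lia).
  replace (j =? S m)%nat with false by (symmetry; apply Nat.eqb_neq; lia). reflexivity. Qed.

Lemma ex_row_ii i : (i <= m)%nat -> row I xs i = u i + v i.
Proof.
  intros Hi. unfold row. rewrite (rsum_two i I m (S m)); [|lia|].
  - replace ((i <=? m) && (m <=? I))%nat with true by (symmetry; apply andb_true_iff; split; apply Nat.leb_le; lia).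
    replace ((i <=? S m) && (S m <=? I))%nat with true by (symmetry; apply andb_true_iff; split; apply Nat.leb_le; lia).
    rewrite ex_xs_m, ex_xs_Sm by lia. reflexivity.
  - intros k Hk H1 H2. apply ex_xs_0; auto.
Qed.
Lemma ex_row_Sm : row I xs (S m) = v (S m).
Proof.
  unfold row. rewrite rsum_cons by lia. rewrite rsum_zero. rewrite ex_xs_Sm by lia. ring.
  intros k Hk. apply ex_xs_0; lia.
Qed.
Lemma ex_row_hi k : (S m < k)%nat -> row I xs k = 0.
Proof. intros Hk. unfold row. apply rsum_zero. intros j Hj. apply ex_xs_0; lia. Qed.

Lemma ex_col_m : col xs m = rsum 0 m u.
Proof. unfold col. apply rsum_ext. intros. apply ex_xs_m. lia. Qed.
Lemma ex_col_Sm : col xs (S m) = rsum 0 (S m) v.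
Proof. unfold col. apply rsum_ext. intros. apply ex_xs_Sm. lia. Qed.
Lemma ex_col_pos : 0 < col xs m.
Proof. rewrite ex_col_m. pose proof (rsum_ge_term 0 m u 0 (fun k _ => Rlt_le _ _ (ex_u_pos k)) ltac:(lia)).
  pose proof (ex_u_pos 0). lra. Qed.
Lemma ex_col_below j : (j < m)%nat -> col xs j = 0.
Proof. intros. unfold col. apply rsum_zero. intros. apply ex_xs_0; lia. Qed.

Lemma ex_tot_cols : rsum 0 m u + rsum 0 (S m) v = 1.
Proof.
  rewrite (D4 a r u v m Ex1 ex_Ru0 ex_Rui ex_Rv0 ex_Rvi m ltac:(lia)). exact HS.
Qed.

Lemma ex_tot : rsum 0 I (row I xs) = 1.
Proof.
  rewrite (rsum_trunc _ I (S m)) by (try lia; intros; apply ex_row_hi; lia).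
  rewrite (rsum_last 0 m (row I xs)) by lia. rewrite ex_row_Sm.
  rewrite (rsum_ext 0 m (row I xs) (fun i => u i + v i)) by (intros; apply ex_row_ii; lia).
  rewrite rsum_plus. rewrite <- ex_tot_cols. rewrite (rsum_last 0 m v) by lia. ring.
Qed.

Lemma ex_wsum : a * wsum I xs (m - 1) = lam - r * rsum 0 m u.
Proof.
  unfold wsum.
  pose proof (D6 a r u v m Ex1 ex_Ru0 ex_Rui ex_Rv0 ex_Rvi (row I xs) (m - 1) ltac:(intros; apply ex_row_ii; lia) ltac:(lia)) as H6.
  replace (S (m - 1)) with m in H6 by lia. rewrite H6.
  pose proof (D3 a r u v m Ex1 ex_Rv0 ex_Rvi m ltac:(lia)) as H3.
  rewrite ex_vSm in H3.
  assert (HUm : rsum 0 m u = rsum 0 (m - 1) u + u m).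
  { replace m with (S (m - 1)) at 1 by lia. rewrite rsum_last by lia. replace (S (m - 1)) with m by lia. auto. }
  pose proof ex_tot_cols as HT. rewrite (rsum_last 0 m v) in HT by lia. rewrite ex_vSm in HT.
  change (u 0%nat) with u0. change (v 0%nat) with v0.
  rewrite HUm. rewrite HUm in HT. lra.
Qed.

Lemma ex_wsum_step k : wsum I xs k <= wsum I xs (S k).
Proof.
  unfold wsum at 2. rewrite wsum_step. fold (wsum I xs k).
  assert (0 <= rsum 0 (S k) (row I xs)).
  { apply rsum_nonneg. intros. unfold row. apply rsum_nonneg. intros. apply ex_xs_nn. lia. }
  lra.
Qed.

Lemma ex_wsum_mono k : (k <= m - 1)%nat -> wsum I xs k <= wsum I xs (m - 1).
Proof.
  intros Hk. replace k with (m - 1 - (m - 1 - k))%nat by lia.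
  generalize (m - 1 - k)%nat. intros t. induction t. rewrite Nat.sub_0_r. lra.
  destruct (le_lt_dec (m - 1) t).
  replace (m - 1 - S t)%nat with (m - 1 - t)%nat by lia. auto.
  pose proof (ex_wsum_step (m - 1 - S t)). replace (S (m - 1 - S t)) with (m - 1 - t)%nat in H by lia. lra.
Qed.

Lemma ex_dwsum k : (k <= m - 1)%nat -> INR d * wsum I xs k <= 1.
Proof.
  intros Hk. pose proof (ex_wsum_mono k Hk). pose proof ex_wsum.
  assert (0 <= r * rsum 0 m u).
  { apply Rmult_le_pos; auto. apply rsum_nonneg. intros; apply Rlt_le, ex_u_pos. }
  assert (0 <= wsum I xs k).
  { unfold wsum. apply rsum_nonneg. intros. apply Rmult_le_pos. apply pos_INR.
    unfold row. apply rsum_nonneg. intros. apply ex_xs_nn. lia. }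
  assert (0 <= a * (wsum I xs (m - 1) - wsum I xs k)) by (apply Rmult_le_pos; [apply Rlt_le, ex_a | lra]).
  assert (lam * (INR d * wsum I xs k) <= lam * 1) by (unfold a in *; lra).
  apply Rmult_le_reg_l in H4; lra.
Qed.

End EX0.

Definition xs0 (lam : R) (d : nat) (i j : nat) : R :=
  match i, j with
  | O, O => 1 - lam - lam / (lam * INR d)
  | O, S O => lam / (lam * INR d)
  | S O, S O => lam
  | _, _ => 0
  end.

Section Z0.
Variables (lam : R) (d I : nat).
Hypothesis Hlam : 0 < lam < 1.
Hypothesis Hd : (2 <= d)%nat.
Hypothesis HI : (1 < I)%nat.
Hypothesis HQ0 : 1 < (1 + lam * INR d) * (1 - lam).

Lemma z_a : 0 < lam * INR d.
Proof. assert (2 <= INR d) by (replace 2 with (INR 2) by (simpl; ring); apply le_INR; lia). nra. Qed.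

Lemma z_c0 : 0 < 1 - lam - lam / (lam * INR d).
Proof.
  pose proof z_a. assert (lam / (lam * INR d) * (lam * INR d) = lam) by (field; split; intro HH; rewrite HH in *; lra).
  assert (lam < (1 - lam) * (lam * INR d)) by nra.
  assert (lam / (lam * INR d) < 1 - lam).
  { apply (Rmult_lt_reg_r (lam * INR d)); auto. lra. }
  lra.
Qed.

Lemma z_zero i j : (2 <= j)%nat -> xs0 lam d i j = 0.
Proof. intros. destruct i as [|[|i]]; destruct j as [|[|j]]; try lia; reflexivity. Qed.
Lemma z_zero2 i j : (2 <= i)%nat -> xs0 lam d i j = 0.
Proof. intros. destruct i as [|[|i]]; try lia; destruct j as [|[|j]]; reflexivity. Qed.

Lemma z_nn i j : (i <= j <= I)%nat -> 0 <= xs0 lam d i j.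
Proof.
  intros. pose proof z_c0. pose proof z_a.
  destruct i as [|[|i]]; destruct j as [|[|j]]; simpl; try lra.
  apply Rlt_le, Rdiv_lt_0_compat; lra.
Qed.

Lemma z_row0 : row I (xs0 lam d) 0 = 1 - lam.
Proof.
  unfold row. rewrite rsum_cons by lia. rewrite rsum_cons by lia. rewrite rsum_zero.
  simpl. field. pose proof z_a. split; intro HH; rewrite HH in *; lra.
  intros. apply z_zero. lia.
Qed.
Lemma z_row1 : row I (xs0 lam d) 1 = lam.
Proof.
  unfold row. rewrite rsum_cons by lia. rewrite rsum_zero. simpl. ring.
  intros. apply z_zero. lia.
Qed.
Lemma z_row_hi k : (2 <= k)%nat -> row I (xs0 lam d) k = 0.
Proof. intros. unfold row. apply rsum_zero. intros. apply z_zero2. auto. Qed.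

Lemma z_tot : rsum 0 I (row I (xs0 lam d)) = 1.
Proof.
  rewrite (rsum_trunc _ I 1) by (try lia; intros; apply z_row_hi; lia).
  rewrite rsum_last, rsum_single by lia. rewrite z_row0, z_row1. ring.
Qed.

Lemma z_col0 : col (xs0 lam d) 0 = 1 - lam - lam / (lam * INR d).
Proof. unfold col. rewrite rsum_single. reflexivity. Qed.

End Z0.

Section FP.
Variables (lam : R) (d I : nat) (y : state).
Hypothesis Hlam : 0 < lam < 1.
Hypothesis Hd : (2 <= d)%nat.
Hypothesis HI : (1 < I)%nat.
Hypothesis Hnn : forall i j, (i <= j <= I)%nat -> 0 <= y i j.
Hypothesis Hdr : forall i j, (i <= j <= I)%nat -> drift lam d I y i j = 0.
Hypothesis Htot0 : rsum 0 I (row I y) = 1.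

Lemma a_pos : 0 < lam * INR d.
Proof. assert (2 <= INR d) by (replace 2 with (INR 2) by (simpl; ring); apply le_INR; lia). nra. Qed.

Lemma y_nn i j : (i <= j <= I)%nat -> 0 <= y i j.
Proof. apply Hnn. Qed.

Lemma y_dr i j : (i <= j <= I)%nat -> drift lam d I y i j = 0.
Proof. apply Hdr. Qed.

Lemma y_tot : rsum 0 I (row I y) = 1.
Proof. exact Htot0. Qed.

Lemma col_nn j : (j <= I)%nat -> 0 <= col y j.
Proof. intros. unfold col. apply rsum_nonneg. intros. apply y_nn. lia. Qed.

Lemma row_nn i : 0 <= row I y i.
Proof. unfold row. apply rsum_nonneg. intros. apply y_nn. lia. Qed.

Lemma exists_m : exists m, (m <= I)%nat /\ 0 < col y m /\ forall j, (j < m)%nat -> col y j = 0.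
Proof.
  assert (exists j, (j <= I)%nat /\ 0 < col y j) as [j Hj].
  { apply NNPP. intros Hno.
    assert (Hz : forall i j, (i <= j <= I)%nat -> y i j = 0).
    { intros i j' Hij. assert (col y j' = 0).
      { pose proof (col_nn j'). destruct (Rlt_dec 0 (col y j')). exfalso; apply Hno; exists j'; split; [lia|auto].
        apply Rnot_lt_le in n. apply Rle_antisym; auto; apply H; lia. }
      apply (rsum_eq0_inv 0 j' (fun i => y i j')); auto; [|lia].
      intros. apply y_nn. lia. }
    pose proof y_tot as Ht. rewrite rsum_zero in Ht. lra.
    intros k Hk. unfold row. apply rsum_zero. intros. apply Hz. lia. }
  destruct (min_exists (fun j => (j <= I)%nat /\ 0 < col y j) j Hj) as [m [[Hm1 Hm2] Hm3]].
  exists m. split; auto. split; auto. intros k Hk.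
  pose proof (col_nn k ltac:(lia)). destruct (Rlt_dec 0 (col y k)).
  exfalso. apply (Hm3 k Hk). split; auto; lia. apply Rnot_lt_le in n. lra.
Qed.

Section M.
Variable m : nat.
Hypothesis Hm : (m <= I)%nat.
Hypothesis Hcm : 0 < col y m.
Hypothesis Hbelow : forall j, (j < m)%nat -> col y j = 0.

Lemma below_zero i j : (j < m)%nat -> (i <= j)%nat -> y i j = 0.
Proof.
  intros H1 H2. apply (rsum_eq0_inv 0 j (fun i => y i j)); [|apply Hbelow; auto|lia].
  intros. apply y_nn. lia.
Qed.

Lemma csum_below j : (j < m)%nat -> csum y j = 0.
Proof. intros H. unfold csum. apply rsum_zero. intros. apply Hbelow. lia. Qed.

Lemma csum_above j : (m <= j <= I)%nat -> csum y j <> 0.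
Proof.
  intros H. unfold csum. assert (col y m <= rsum 0 j (fun i => col y i)).
  { apply (rsum_ge_term 0 j (fun i => col y i) m); [intros; apply col_nn; lia | lia]. }
  intro; lra.
Qed.

Lemma R_above j : (m <= j <= I)%nat -> Rj lam d I y j = 0.
Proof. intros. apply Rj_pos. apply csum_above. auto. Qed.
Lemma G_above j : (m <= j <= I)%nat -> Gj lam d I y j = 0.
Proof. intros. apply Gj_pos. apply csum_above. auto. Qed.
Lemma rho_above k a b : (m <= k <= I)%nat -> rho lam d I y k a b = 0.
Proof. intros. apply rho_R0. apply R_above. auto. Qed.
Lemma rho_below k a b : (b < m)%nat -> rho lam d I y k a b = 0.
Proof. intros. apply rho_col0. apply Hbelow. auto. Qed.

Lemma row_split i : (i <= I)%nat -> row I y i = y i i + rsum (S i) I (y i).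
Proof. intros. unfold row. apply rsum_cons. auto. Qed.

Lemma col_high_zero_aux j : (m + 2 <= j <= I)%nat ->
  (forall k, (j < k <= I)%nat -> forall i, (i <= k)%nat -> y i k = 0) ->
  forall i, (i <= j)%nat -> y i j = 0.
Proof.
  intros Hj IH.
  assert (Hr : rsum (S j) I (y j) = 0).
  { apply rsum_zero. intros k Hk. apply IH; lia. }
  assert (Hjj : y j j = 0).
  { pose proof (y_dr j j ltac:(lia)) as E.
    destruct (Nat.eq_dec j I) as [->|Hne].
    - rewrite drift_II in E by lia.
      rewrite rho_above, G_above, rho_above in E by lia. lra.
    - rewrite drift_diag in E by lia. rewrite row_split in E by lia. rewrite Hr in E.
      rewrite !rho_above, !G_above in E by lia. ring_simplify in E. lra. }
  assert (forall t, y (j - t)%nat j = 0).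
  { induction t. rewrite Nat.sub_0_r. auto.
    destruct (le_lt_dec j t). replace (j - S t)%nat with (j - t)%nat by lia. auto.
    pose proof (y_dr (j - S t) j ltac:(lia)) as E.
    rewrite drift_lt in E by lia. replace (S (j - S t)) with (j - t)%nat in E by lia.
    rewrite IHt in E. rewrite !rho_above in E by lia. pose proof a_pos as Ha.
    assert (ind (0 <? j - S t)%nat = 0 \/ ind (0 <? j - S t)%nat = 1) as Hi.
    { destruct (0 <? j - S t)%nat; simpl; auto. }
    destruct Hi as [Hi|Hi]; rewrite Hi in E.
    - assert (H1 : y (j - S t)%nat j * (lam * INR d) = 0) by lra.
      apply Rmult_integral in H1. destruct H1; lra.
    - assert (H1 : y (j - S t)%nat j * (1 + lam * INR d) = 0) by lra.
      apply Rmult_integral in H1. destruct H1; lra. }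
  intros i Hi. replace i with (j - (j - i))%nat by lia. auto.
Qed.

Lemma col_high_zero j : (m + 2 <= j <= I)%nat -> forall i, (i <= j)%nat -> y i j = 0.
Proof.
  intros Hj.
  assert (forall n j', (m + 2 <= j' <= I)%nat -> (I - j' < n)%nat -> forall i, (i <= j')%nat -> y i j' = 0).
  { induction n. intros; lia.
    intros j' Hj' Hn. apply col_high_zero_aux; auto.
    intros k Hk. apply IHn; lia. }
  apply (H (S (I - j))); lia.
Qed.

Lemma supp i j : (i <= j <= I)%nat -> j <> m -> j <> S m -> y i j = 0.
Proof.
  intros H H1 H2. destruct (le_lt_dec m j).
  apply col_high_zero; lia. apply below_zero; lia.
Qed.


Lemma Rj_nn x j : 0 <= Rj lam d I x j.
Proof. unfold Rj. apply Rmult_le_pos. apply Rmax_l. destruct (is0 (csum x j)); simpl; lra. Qed.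

Lemma G_chain : (2 <= m)%nat -> forall k, (1 <= k <= m - 1)%nat ->
  Gj lam d I y k = lam * INR d * rsum 0 k (row I y).
Proof.
  intros Hm2. induction k; intros Hk. lia.
  destruct (Nat.eq_dec k 0) as [->|Hk0].
  - pose proof (y_dr 0 0 ltac:(lia)) as E0. rewrite drift_00 in E0.
    pose proof (y_dr 1 1 ltac:(lia)) as E1. rewrite drift_11 in E1.
    rewrite (below_zero 0 0) in E0 by lia. rewrite (below_zero 1 1) in E1 by lia.
    rewrite rho_below in E1 by lia.
    rewrite rsum_last, rsum_single by lia. lra.
  - pose proof (y_dr (S k) (S k) ltac:(lia)) as E. rewrite drift_diag in E by lia.
    rewrite (below_zero (S k) (S k)) in E by lia. rewrite !rho_below in E by lia.
    replace (S k - 1)%nat with k in E by lia. rewrite IHk in E by lia.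
    rewrite rsum_last by lia. lra.
Qed.

Lemma R_eq : (1 <= m)%nat -> Rj lam d I y (m - 1) = lam - lam * INR d * wsum I y (m - 1).
Proof.
  intros Hm1. pose proof a_pos as Ha.
  destruct (Nat.eq_dec m 1) as [Hme|Hm2].
  - rewrite Hme. simpl. pose proof (y_dr 0 0 ltac:(lia)) as E0. rewrite drift_00 in E0.
    rewrite (below_zero 0 0) in E0 by lia. unfold wsum. rewrite rsum_single.
    simpl (INR (0 + 1 - 0)). lra.
  - assert (HG := G_chain ltac:(lia) (m - 1) ltac:(lia)).
    rewrite Gj_zero in HG by (apply csum_below; lia).
    rewrite Rj_zero by (apply csum_below; lia).
    unfold isle in HG. destruct (Rle_dec (INR d * wsum I y (m - 1)) 1) as [Hle|Hgt].
    + rewrite Rmax_right. ring. nra.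
    + simpl in HG. assert (HP : rsum 0 (m - 1) (row I y) = 0) by nra.
      assert (HW : wsum I y (m - 1) = 0).
      { unfold wsum. apply rsum_zero. intros k Hk.
        rewrite (rsum_eq0_inv 0 (m - 1) (row I y)); auto. ring. intros; apply row_nn. }
      rewrite HW. rewrite Rmax_right; lra.
Qed.

Lemma row_ii (HmI : (S m <= I)%nat) i : (i <= m)%nat -> row I y i = y i m + y i (S m).
Proof.
  intros Hi. unfold row. rewrite (rsum_two i I m (S m)); [|lia|].
  - replace ((i <=? m) && (m <=? I))%nat with true by (symmetry; apply andb_true_iff; split; apply Nat.leb_le; lia).
    replace ((i <=? S m) && (S m <=? I))%nat with true by (symmetry; apply andb_true_iff; split; apply Nat.leb_le; lia).
    reflexivity.
  - intros k Hk H1 H2. apply supp; auto; lia.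
Qed.

Lemma row_Sm (HmI : (S m <= I)%nat) : row I y (S m) = y (S m) (S m).
Proof.
  unfold row. rewrite rsum_cons by lia. rewrite rsum_zero. ring.
  intros k Hk. apply supp; auto; lia.
Qed.

Lemma row_hi (HmI : (S m <= I)%nat) k : (S m < k <= I)%nat -> row I y k = 0.
Proof. intros Hk. unfold row. apply rsum_zero. intros j Hj. apply supp; auto; lia. Qed.


Section II.
Hypothesis Hm1 : (1 <= m)%nat.
Hypothesis HmI : (S m <= I)%nat.

Definition rr := Rj lam d I y (m - 1) / col y m.

Lemma rr_nn : 0 <= rr.
Proof. unfold rr. apply Rmult_le_pos. apply Rj_nn. left. apply Rinv_0_lt_compat. auto. Qed.

Lemma rho_m k i : k = (m - 1)%nat -> rho lam d I y k i m = rr * y i m.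
Proof. intros ->. rewrite rho_pos by auto. unfold rr. field. intro HH; lra. Qed.

Lemma Eu0 : y 1%nat m = (lam * INR d + rr) * y 0%nat m.
Proof.
  pose proof (y_dr 0 m ltac:(lia)) as E. rewrite drift_lt in E by lia.
  rewrite rho_m in E by auto. simpl in E. rewrite andb_false_r in E. simpl in E. lra.
Qed.

Lemma Eui i : (1 <= i <= m - 1)%nat -> y (S i) m = (1 + lam * INR d + rr) * y i m.
Proof.
  intros Hi. pose proof (y_dr i m ltac:(lia)) as E. rewrite drift_lt in E by lia.
  rewrite rho_m in E by auto. rewrite (rho_below (m - 2)) in E by lia.
  replace (0 <? i)%nat with true in E by (symmetry; apply Nat.ltb_lt; lia).
  replace (m =? I)%nat with false in E by (symmetry; apply Nat.eqb_neq; lia).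
  simpl ind in E. lra.
Qed.

Lemma Ev0 : y 1%nat (S m) = lam * INR d * y 0%nat (S m).
Proof.
  pose proof (y_dr 0 (S m) ltac:(lia)) as E. rewrite drift_lt in E by lia.
  rewrite rho_above in E by lia. simpl in E. rewrite andb_false_r in E. simpl in E. lra.
Qed.

Lemma Evi i : (1 <= i <= m)%nat -> y (S i) (S m) = (1 + lam * INR d) * y i (S m) - rr * y (i - 1)%nat m.
Proof.
  intros Hi. pose proof (y_dr i (S m) ltac:(lia)) as E. rewrite drift_lt in E by lia.
  rewrite (rho_above (S m - 1)) in E by lia.
  replace (S m - 2)%nat with (m - 1)%nat in E by lia. replace (S m - 1)%nat with m in E by lia.
  rewrite rho_m in E by auto. rewrite (rho_above (I - 1)) in E by lia.
  replace (0 <? i)%nat with true in E by (symmetry; apply Nat.ltb_lt; lia).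
  simpl ind in E. lra.
Qed.

Lemma Evd : y (S m) (S m) = rr * y m m.
Proof.
  pose proof (y_dr (S m) (S m) ltac:(lia)) as E.
  destruct (Nat.eq_dec (S m) I) as [HeI|HeI].
  - rewrite HeI in E.
    rewrite drift_II in E by lia.
    replace (I - 2)%nat with (m - 1)%nat in E by lia. replace (I - 1)%nat with m in E by lia.
    rewrite rho_m in E by auto. rewrite G_above in E by lia. rewrite (rho_above m) in E by lia.
    rewrite HeI. lra.
  - rewrite drift_diag in E by lia. rewrite row_Sm in E by auto.
    replace (S m - 2)%nat with (m - 1)%nat in E by lia. replace (S m - 1)%nat with m in E by lia.
    rewrite rho_m in E by auto. rewrite (rho_above m) in E by lia. rewrite !G_above in E by lia.
    lra.
Qed.

Lemma caseII :
  let a := lam * INR d in let u0 := y 0%nat m in let v0 := y 0%nat (S m) in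
  0 <= rr /\ 0 < u0 /\ 0 <= v0 /\ u0 + v0 = 1 - lam /\
  (1 + a) ^ m * (u0 + (1 + a) * v0) = 1 /\
  (1 + rr) * ((a + rr) * (1 + a + rr) ^ (m - 1) * u0) = a * (1 + a) ^ (m - 1) * (u0 + (1 + a) * v0) /\
  (forall i, (i <= m)%nat -> y i m = useq a rr u0 i) /\
  (forall i, (i <= S m)%nat -> y i (S m) = vseq a rr u0 v0 i).
Proof.
  intros a u0 v0. pose proof a_pos as Ha. fold a in Ha.
  set (u := fun i => y i m). set (v := fun i => y i (S m)).
  assert (Ru0 : u 1%nat = (a + rr) * u 0%nat) by exact Eu0.
  assert (Rui : forall i, (1 <= i <= m - 1)%nat -> u (S i) = (1 + a + rr) * u i) by exact Eui.
  assert (Rv0 : v 1%nat = a * v 0%nat) by exact Ev0.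
  assert (Rvi : forall i, (1 <= i <= m)%nat -> v (S i) = (1 + a) * v i - rr * u (i - 1)%nat) by exact Evi.
  assert (Hvd : v (S m) = rr * u m) by exact Evd.
  pose proof rr_nn as Hr.
  assert (Htot : rsum 0 m u + rsum 0 (S m) v = 1).
  { rewrite <- y_tot. rewrite (rsum_trunc _ I (S m)) by (try lia; intros; apply row_hi; auto; lia).
    rewrite (rsum_last 0 m (row I y)) by lia. rewrite row_Sm by auto. rewrite (rsum_last 0 m v) by lia.
    rewrite (rsum_ext 0 m (row I y) (fun i => u i + v i)) by (intros; apply row_ii; auto; lia).
    rewrite rsum_plus. unfold v. ring. }
  pose proof (D4 a rr u v m Hm1 Ru0 Rui Rv0 Rvi m ltac:(lia)) as H4.
  assert (HS : (1 + a) ^ m * (u0 + (1 + a) * v0) = 1) by (rewrite H4 in Htot; exact Htot).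
  pose proof (D2 a rr u m Hm1 Ru0 Rui m ltac:(lia)) as H2.
  assert (Hc : col y m = rsum 0 m u) by reflexivity.
  assert (Hu0 : 0 < u0).
  { assert (0 < (1 + a + rr) ^ m) by (apply pow_lt; lra).
    destruct (Rlt_le_dec 0 u0); auto. exfalso.
    assert ((1 + a + rr) ^ m * u0 <= 0). { nra. }
    assert (Hpos : 0 < (1 + a + rr) ^ m * u 0%nat) by (rewrite <- H2, <- Hc; auto).
    change (u 0%nat) with u0 in Hpos. lra. }
  assert (Hv0 : 0 <= v0) by (apply y_nn; lia).
  pose proof (R_eq Hm1) as HR.
  assert (HRr : Rj lam d I y (m - 1) = rr * rsum 0 m u).
  { unfold rr. rewrite <- Hc. field. intro HH; lra. }
  pose proof (D6 a rr u v m Hm1 Ru0 Rui Rv0 Rvi (row I y) (m - 1) ltac:(intros; apply row_ii; auto; lia) ltac:(lia)) as H6.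
  replace (S (m - 1)) with m in H6 by lia.
  pose proof (D3 a rr u v m Hm1 Rv0 Rvi m ltac:(lia)) as H3.
  assert (HUm : rsum 0 m u = rsum 0 (m - 1) u + u m).
  { replace m with (S (m - 1)) at 1 by lia. rewrite rsum_last by lia. replace (S (m - 1)) with m by lia. auto. }
  assert (HVm : rsum 0 (S m) v = rsum 0 m v + v (S m)) by (apply rsum_last; lia).
  unfold wsum in HR. fold a in HR.
  assert (Hsum : u0 + v0 = 1 - lam).
  { unfold u0, v0. fold (u 0%nat) (v 0%nat).
    assert (E1 : rr * rsum 0 m u = rr * rsum 0 (m - 1) u + rr * u m) by (rewrite HUm; ring).
    lra. }
  pose proof (D5 a rr u v m Hm1 Ru0 Rui Rv0 Rvi m ltac:(lia)) as H5.
  pose proof (D1 a rr u m Hm1 Ru0 Rui (m - 1) ltac:(lia)) as H1.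
  replace (S (m - 1)) with m in H1 by lia.
  pose proof (D2 a rr u m Hm1 Ru0 Rui (m - 1) ltac:(lia)) as H2'.
  assert (Hreq : (1 + rr) * ((a + rr) * (1 + a + rr) ^ (m - 1) * u0) = a * (1 + a) ^ (m - 1) * (u0 + (1 + a) * v0)).
  { change u0 with (u 0%nat). change v0 with (v 0%nat). rewrite <- H5. rewrite Hvd. rewrite H1, H2'. ring. }
  assert (Hu : forall i, (i <= m)%nat -> y i m = useq a rr u0 i).
  { intros i Hi. apply (useq_eq a rr u0 u m); auto. }
  repeat split; auto.
  intros i Hi. apply (vseq_eq a rr u0 v0 u v m); auto.
Qed.

End II.

Section III.
Hypothesis HmI : m = I.

Lemma caseIII : (1 + lam * INR d) ^ m * (1 - lam) <= 1.
Proof.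
  pose proof a_pos as Ha. set (a := lam * INR d) in *.
  set (u := fun i => y i m).
  assert (Hm1 : (1 <= m)%nat) by lia.
  assert (Hrow : forall i, (i <= m)%nat -> row I y i = u i).
  { intros i Hi. unfold row. rewrite <- HmI. rewrite (rsum_two i m m (S m)); [|lia|].
    - replace ((i <=? m) && (m <=? m))%nat with true by (symmetry; apply andb_true_iff; split; apply Nat.leb_le; lia).
      replace ((i <=? S m) && (S m <=? m))%nat with false by (symmetry; apply andb_false_iff; right; apply Nat.leb_gt; lia).
      unfold u. ring.
    - intros k Hk H1 H2. apply supp; auto; lia. }
  assert (Ru0 : u 1%nat = (a + rr) * u 0%nat).
  { pose proof (y_dr 0 m ltac:(lia)) as E. rewrite drift_lt in E by lia.
    rewrite rho_m in E by auto. simpl in E. rewrite andb_false_r in E. simpl in E. fold a in E. unfold u. lra. }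
  assert (Rui : forall i, (1 <= i <= m - 1)%nat -> u (S i) = (1 + a + rr) * u i - rr * u (i - 1)%nat).
  { intros i Hi. pose proof (y_dr i m ltac:(lia)) as E. rewrite drift_lt in E by lia.
    rewrite (rho_m (m - 1) i) in E by auto. rewrite (rho_below (m - 2)) in E by lia.
    replace (0 <? i)%nat with true in E by (symmetry; apply Nat.ltb_lt; lia).
    replace (m =? I)%nat with true in E by (symmetry; apply Nat.eqb_eq; lia).
    replace (rho lam d I y (I - 1) (i - 1) I) with (rr * y (i - 1)%nat m) in E
      by (rewrite <- (rho_m (m - 1) (i - 1)) by auto; rewrite HmI; reflexivity).
    simpl ind in E. fold a in E. unfold u. lra. }
  assert (Rk : forall k, (k <= m - 1)%nat -> u (S k) = a * rsum 0 k u + rr * u k).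
  { induction k; intros Hk. rewrite rsum_single. rewrite Ru0. ring.
    rewrite Rui by lia. replace (S k - 1)%nat with k by lia.
    rewrite (rsum_last 0 k u) by lia. rewrite IHk by lia. ring. }
  assert (Htot : rsum 0 m u = 1).
  { rewrite <- y_tot. rewrite <- HmI at 1. symmetry. apply rsum_ext. intros; apply Hrow; lia. }
  pose proof rr_nn as Hr.
  assert (HRr : Rj lam d I y (m - 1) = rr * rsum 0 m u).
  { unfold rr. assert (Hc : col y m = rsum 0 m u) by reflexivity. rewrite <- Hc. field. intro HH; lra. }
  pose proof (R_eq Hm1) as HR. unfold wsum in HR. fold a in HR.
  assert (HW : forall k, (k <= m - 1)%nat -> a * rsum 0 k (fun i => INR (k + 1 - i) * row I y i) =
            rsum 0 (S k) u - u 0%nat - rr * rsum 0 k u).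
  { induction k; intros Hk.
    - rewrite !rsum_single, rsum_last, rsum_single by lia. rewrite Hrow by lia. rewrite Ru0. simpl. ring.
    - rewrite wsum_step. rewrite Rmult_plus_distr_l. rewrite IHk by lia.
      rewrite (rsum_ext 0 (S k) (row I y) u) by (intros; apply Hrow; lia).
      rewrite (rsum_last 0 (S k) u) by lia. rewrite Rk by lia.
      rewrite (rsum_last 0 k u) by lia. ring. }
  pose proof (HW (m - 1)%nat ltac:(lia)) as HW1. replace (S (m - 1)) with m in HW1 by lia.
  assert (HP : rsum 0 (m - 1) u <= 1).
  { rewrite <- Htot. replace m with (S (m - 1)) at 2 by lia. rewrite rsum_last by lia.
    assert (0 <= u (S (m - 1))) by (apply y_nn; lia). lra. }
  assert (Hu0 : 1 - lam <= u 0%nat).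
  { assert (rr * rsum 0 (m - 1) u <= rr * 1) by (apply Rmult_le_compat_l; auto). rewrite Htot in HRr, HW1. lra. }
  assert (Hgrow : forall k, (k <= m)%nat -> (1 + a) ^ k * u 0%nat <= rsum 0 k u).
  { induction k; intros Hk. rewrite rsum_single. simpl. lra.
    rewrite rsum_last by lia. rewrite Rk by lia.
    assert (0 <= u k) by (apply y_nn; lia).
    pose proof (IHk ltac:(lia)). simpl.
    assert (0 <= rr * u k) by (apply Rmult_le_pos; auto). nra. }
  pose proof (Hgrow m ltac:(lia)) as Hg. rewrite Htot in Hg.
  assert (0 < (1 + a) ^ m) by (apply pow_lt; lra).
  assert ((1 + a) ^ m * (1 - lam) <= (1 + a) ^ m * u 0%nat) by (apply Rmult_le_compat_l; lra).
  lra.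
Qed.
End III.

Section I0.
Hypothesis Hm0 : m = 0%nat.

Lemma caseI : lam * INR d * y 0%nat 1%nat = lam /\ y 1%nat 1%nat = lam /\
  y 0%nat 0%nat + y 0%nat 1%nat + y 1%nat 1%nat = 1 /\ 0 < y 0%nat 0%nat.
Proof.
  assert (HmI : (S m <= I)%nat) by lia.
  pose proof (row_ii HmI 0 ltac:(lia)) as Hr0. rewrite Hm0 in Hr0.
  pose proof (row_Sm HmI) as Hr1. rewrite Hm0 in Hr1.
  pose proof (y_dr 0 0 ltac:(lia)) as E0. rewrite drift_00 in E0.
  rewrite R_above in E0 by lia. rewrite Hr0 in E0.
  pose proof (y_dr 0 1 ltac:(lia)) as E1. rewrite drift_lt in E1 by lia.
  rewrite rho_above in E1 by lia. simpl in E1. rewrite andb_false_r in E1. simpl in E1.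
  assert (Htot : row I y 0 + row I y 1 = 1).
  { rewrite <- y_tot. rewrite (rsum_trunc _ I 1); [|lia|].
    rewrite rsum_last, rsum_single by lia. reflexivity.
    intros k Hk. apply (row_hi HmI). lia. }
  rewrite Hr0, Hr1 in Htot.
  assert (Hc : col y 0 = y 0%nat 0%nat) by (unfold col; rewrite rsum_single; reflexivity).
  rewrite <- Hm0 in Hc at 1. split; [lra|]. split; [lra|]. split; [lra|]. lra.
Qed.
End I0.

Section EX.
Variables (u0 v0 r : R).
Hypothesis Ex1 : (1 <= m)%nat.
Hypothesis ExI : (S m <= I)%nat.
Hypothesis Hu0 : 0 < u0.
Hypothesis Hv0 : 0 <= v0.
Hypothesis Hr : 0 <= r.
Hypothesis Hsum : u0 + v0 = 1 - lam.
Hypothesis HS : (1 + lam * INR d) ^ m * (u0 + (1 + lam * INR d) * v0) = 1.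
Hypothesis Hreq : (1 + r) * ((lam * INR d + r) * (1 + lam * INR d + r) ^ (m - 1) * u0) =
  lam * INR d * (1 + lam * INR d) ^ (m - 1) * (u0 + (1 + lam * INR d) * v0).
Hypothesis Hy : y = xsJ (lam * INR d) r u0 v0 m.

Let a := lam * INR d.
Let u := useq a r u0.
Let v := vseq a r u0 v0.

Lemma W_m i : (i <= m)%nat -> y i m = u i.
Proof. intros. rewrite Hy. apply ex_xs_m; auto. Qed.
Lemma W_Sm i : (i <= S m)%nat -> y i (S m) = v i.
Proof. intros. rewrite Hy. eapply ex_xs_Sm; eauto. Qed.
Lemma W_0 i j : j <> m -> j <> S m -> y i j = 0.
Proof. intros. rewrite Hy. eapply ex_xs_0; eauto. Qed.
Lemma W_row_ii i : (i <= m)%nat -> row I y i = u i + v i.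
Proof. intros. rewrite Hy. eapply ex_row_ii; eauto. Qed.
Lemma W_row_Sm : row I y (S m) = v (S m).
Proof. rewrite Hy. eapply ex_row_Sm; eauto. Qed.
Lemma W_row_hi k : (S m < k)%nat -> row I y k = 0.
Proof. intros. rewrite Hy. eapply ex_row_hi; eauto. Qed.
Lemma W_colm : col y m = rsum 0 m u.
Proof. rewrite Hy. eapply ex_col_m; eauto. Qed.
Lemma W_wsum : a * wsum I y (m - 1) = lam - r * rsum 0 m u.
Proof. rewrite Hy. eapply ex_wsum; eauto. Qed.
Lemma W_dwsum k : (k <= m - 1)%nat -> INR d * wsum I y k <= 1.
Proof. intros. rewrite Hy. eapply ex_dwsum; eauto. Qed.
Lemma W_vSm : v (S m) = r * u m.
Proof. eapply ex_vSm; eauto. Qed.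
Lemma W_Rui i : (1 <= i <= m - 1)%nat -> u (S i) = (1 + a + r) * u i.
Proof. intros Hi. destruct i. lia. reflexivity. Qed.
Lemma W_Rvi i : (1 <= i <= m)%nat -> v (S i) = (1 + a) * v i - r * u (i - 1)%nat.
Proof. intros Hi. destruct i. lia. simpl. replace (i - 0)%nat with i by lia. reflexivity. Qed.

Lemma K_Rk k : (k <= m - 1)%nat -> Rj lam d I y k = lam - a * wsum I y k.
Proof.
  intros Hk. rewrite Rj_zero by (apply csum_below; lia).
  pose proof (W_dwsum k Hk). rewrite Rmax_right. unfold a; ring. nra.
Qed.

Lemma K_R0 : Rj lam d I y 0 = lam - a * row I y 0.
Proof. rewrite K_Rk by lia. unfold wsum. rewrite rsum_single. simpl (INR _). ring. Qed.

Lemma K_rr : rr = r.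
Proof.
  unfold rr. rewrite K_Rk by lia. rewrite W_wsum. rewrite W_colm. field.
  rewrite <- W_colm. intro HH; lra.
Qed.

Lemma K_Gk k : (1 <= k <= m - 1)%nat -> Gj lam d I y k = a * rsum 0 k (row I y).
Proof.
  intros Hk. rewrite Gj_zero by (apply csum_below; lia).
  rewrite isle_t by (apply W_dwsum; lia). simpl. unfold a. ring.
Qed.

Lemma K_diag : (1 + r) * u m = a * (v m + rsum 0 (m - 1) (row I y)).
Proof.
  rewrite (rsum_ext 0 (m - 1) (row I y) (fun i => u i + v i)) by (intros; apply W_row_ii; lia).
  rewrite rsum_plus.
  assert (Ru0 : u 1%nat = (a + r) * u 0%nat) by reflexivity.
  assert (Rv0 : v 1%nat = a * v 0%nat) by reflexivity.
  pose proof (D1 a r u m Ex1 Ru0 W_Rui (m - 1) ltac:(lia)) as H1.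
  replace (S (m - 1)) with m in H1 by lia.
  pose proof (D3 a r u v m Ex1 Rv0 W_Rvi m ltac:(lia)) as H3.
  rewrite W_vSm in H3.
  assert (HV : rsum 0 m v = rsum 0 (m - 1) v + v m).
  { replace m with (S (m - 1)) at 1 by lia. rewrite rsum_last by lia. replace (S (m - 1)) with m by lia. auto. }
  rewrite HV in H3. rewrite H1 in *. lra.
Qed.

Lemma EX_drift i j : (i <= j <= I)%nat -> drift lam d I y i j = 0.
Proof.
  intros Hij. pose proof K_rr as Krr.
  destruct (lt_eq_lt_dec j m) as [[Hjm|Hjm]|Hjm].
  -
    destruct (Nat.eq_dec i j) as [Heq|Hne].
    + subst i. destruct j as [|[|j]].
      * rewrite drift_00. rewrite (below_zero 0 0) by lia. rewrite K_R0. unfold a. ring.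
      * rewrite drift_11. rewrite (below_zero 1 1) by lia. rewrite rho_below by lia.
        rewrite K_R0. rewrite K_Gk by lia. rewrite rsum_last, rsum_single by lia. unfold a. ring.
      * rewrite drift_diag by lia. rewrite (below_zero (S (S j)) (S (S j))) by lia.
        rewrite !rho_below by lia. rewrite !K_Gk by lia.
        replace (S (S j) - 1)%nat with (S j) by lia. rewrite (rsum_last 0 (S j)) by lia. unfold a. ring.
    + rewrite drift_lt by lia. rewrite !below_zero by lia. rewrite !rho_below by lia.
      replace (j =? I)%nat with false by (symmetry; apply Nat.eqb_neq; lia). simpl ind. ring.
  -
    rewrite Hjm in *.
    destruct (Nat.eq_dec i m) as [Heq|Hne].
    + rewrite Heq. pose proof K_diag as KD.
      destruct (Nat.eq_dec m 1) as [Hm1|Hm1].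
      * rewrite Hm1. rewrite drift_11. rewrite K_R0.
        pose proof (rho_m 0 1 ltac:(lia)) as HR1. rewrite Hm1 in HR1. rewrite HR1.
        rewrite G_above by lia. rewrite Krr. rewrite !W_row_ii by lia.
        pose proof (W_m 1 ltac:(lia)) as Hw. rewrite Hm1 in Hw. rewrite Hw.
        rewrite Hm1 in KD. simpl (1 - 1)%nat in KD. rewrite rsum_single in KD. rewrite W_row_ii in KD by lia.
        unfold a in *. lra.
      * rewrite drift_diag by lia. rewrite rho_m by auto. rewrite (rho_below (m - 2)) by lia.
        rewrite (G_above m) by lia. rewrite K_Gk by lia. rewrite W_row_ii by lia.
        rewrite Krr. rewrite ?W_m, ?W_Sm by lia. unfold a in *. lra.
    + rewrite drift_lt by lia. rewrite rho_m by auto. rewrite Krr.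
      destruct i.
      * simpl. rewrite andb_false_r. simpl. rewrite !W_m by lia. change (u 1%nat) with ((a + r) * u 0%nat).
        unfold a. ring.
      * rewrite (rho_below (m - 2)) by lia.
        replace (m =? I)%nat with false by (symmetry; apply Nat.eqb_neq; lia).
        replace (0 <? S i)%nat with true by reflexivity. simpl ind.
        rewrite !W_m by lia. rewrite W_Rui by lia. unfold a. ring.
  - destruct (Nat.eq_dec j (S m)) as [HjS|HjS].
    + rewrite HjS in *. destruct (Nat.eq_dec i (S m)) as [Heq|Hne].
      * rewrite Heq. destruct (Nat.eq_dec (S m) I) as [HeI|HeI].
        -- rewrite HeI. rewrite drift_II by lia.
           replace (y I I) with (y (S m) (S m)) by (rewrite HeI; reflexivity).
           replace (I - 2)%nat with (m - 1)%nat by lia. replace (I - 1)%nat with m by lia.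
           rewrite rho_m by auto. rewrite G_above by lia. rewrite (rho_above m) by lia.
           rewrite Krr. rewrite ?W_m, ?W_Sm by lia. rewrite W_vSm. ring.
        -- rewrite drift_diag by lia. rewrite W_row_Sm.
           replace (S m - 2)%nat with (m - 1)%nat by lia. replace (S m - 1)%nat with m by lia.
           rewrite rho_m by auto. rewrite (rho_above m) by lia. rewrite !G_above by lia.
           rewrite Krr. rewrite ?W_m, ?W_Sm by lia. rewrite W_vSm. ring.
      * rewrite drift_lt by lia. rewrite (rho_above (S m - 1)) by lia.
        rewrite (rho_above (I - 1)) by lia.
        destruct i.
        -- simpl. rewrite !W_Sm by lia. change (v 1%nat) with (a * v 0%nat). unfold a. ring.
        -- replace (S m - 2)%nat with (m - 1)%nat by lia. replace (S m - 1)%nat with m by lia.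
           rewrite rho_m by auto. rewrite Krr. simpl (S i - 1)%nat. rewrite Nat.sub_0_r.
           replace (0 <? S i)%nat with true by reflexivity. simpl ind.
           rewrite !W_Sm by lia. rewrite W_m by lia. rewrite (W_Rvi (S i)) by lia.
           replace (S i - 1)%nat with i by lia. unfold a. ring.
    +
      destruct (Nat.eq_dec i j) as [Heq|Hne].
      * rewrite Heq. destruct (Nat.eq_dec j I) as [HeI|HeI].
        -- rewrite HeI. rewrite drift_II by lia. rewrite !rho_above by lia. rewrite G_above by lia.
           rewrite W_0 by lia. ring.
        -- rewrite drift_diag by lia. rewrite !rho_above by lia. rewrite !G_above by lia.
           rewrite W_row_hi by lia. rewrite W_0 by lia. ring.
      * rewrite drift_lt by lia. rewrite !rho_above by lia. rewrite !W_0 by lia. ring.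
Qed.

End EX.

Section EXz.
Hypothesis Hm0 : m = 0%nat.
Hypothesis HyZ : y = xs0 lam d.
Hypothesis HQ0z : 1 < (1 + lam * INR d) * (1 - lam).

Lemma EXz_drift i j : (i <= j <= I)%nat -> drift lam d I y i j = 0.
Proof.
  intros Hij. clear Hdr. pose proof a_pos as Ha.
  assert (Hr0 : row I y 0 = 1 - lam) by (rewrite HyZ; eapply z_row0; eauto).
  assert (Hr1 : row I y 1 = lam) by (rewrite HyZ; eapply z_row1; eauto).
  assert (Hrh : forall k, (2 <= k)%nat -> row I y k = 0) by (intros; rewrite HyZ; eapply z_row_hi; eauto).
  assert (Hz : forall i j, (2 <= j)%nat -> y i j = 0) by (intros; rewrite HyZ; eapply z_zero; eauto).
  assert (Hz2 : forall i j, (2 <= i)%nat -> y i j = 0) by (intros; rewrite HyZ; eapply z_zero2; eauto).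
  assert (H00 : y 0%nat 0%nat = 1 - lam - lam / (lam * INR d)) by (rewrite HyZ; reflexivity).
  assert (H01 : y 0%nat 1%nat = lam / (lam * INR d)) by (rewrite HyZ; reflexivity).
  assert (H11 : y 1%nat 1%nat = lam) by (rewrite HyZ; reflexivity).
  destruct (Nat.eq_dec i j) as [Heq|Hne].
  - subst i. destruct j as [|[|j]].
    + rewrite drift_00. rewrite R_above by lia. rewrite Hr0, H00. field. split; intro HH; rewrite HH in *; lra.
    + rewrite drift_11. rewrite R_above by lia. rewrite rho_above by lia. rewrite G_above by lia.
      rewrite Hr1, H11. ring.
    + destruct (Nat.eq_dec (S (S j)) I) as [HeI|HeI].
      * rewrite HeI. rewrite drift_II by lia. rewrite !rho_above by lia. rewrite G_above by lia.
        rewrite Hz by lia. ring.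
      * rewrite drift_diag by lia. rewrite !rho_above by lia. rewrite !G_above by lia.
        rewrite Hrh by lia. rewrite Hz by lia. ring.
  - rewrite drift_lt by lia. rewrite !rho_above by lia.
    destruct j as [|[|j]]. lia.
    + assert (i = 0%nat) by lia. subst i. rewrite H11, H01. simpl. field. split; intro HH; rewrite HH in *; lra.
    + rewrite !Hz by lia. ring.
Qed.
End EXz.

End M.
End FP.

Definition Qp (lam : R) (d n : nat) : Prop :=
  (1 + lam * INR d) ^ n * (1 - lam) <= 1 /\ 1 < (1 + lam * INR d) ^ (S n) * (1 - lam).

Lemma Q_unique lam d n n' : 0 < lam < 1 -> (2 <= d)%nat -> Qp lam d n -> Qp lam d n' -> n = n'.
Proof.
  intros Hl Hd [H1 H2] [H1' H2'].
  assert (Ha : 0 < lam * INR d).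
  { assert (2 <= INR d) by (replace 2 with (INR 2) by (simpl; ring); apply le_INR; lia). nra. }
  assert (forall p q, (p < q)%nat -> Qp lam d p -> Qp lam d q -> False).
  { intros p q Hpq [A1 A2] [B1 B2].
    assert ((1 + lam * INR d) ^ (S p) <= (1 + lam * INR d) ^ q) by (apply Rle_pow; lra || lia).
    assert ((1 + lam * INR d) ^ (S p) * (1 - lam) <= (1 + lam * INR d) ^ q * (1 - lam))
      by (apply Rmult_le_compat_r; lra). lra. }
  destruct (lt_eq_lt_dec n n') as [[Hlt|Heq]|Hgt]; auto.
  exfalso; eapply H; eauto; split; auto.
  exfalso; eapply H; eauto; split; auto.
Qed.

Lemma Q_jstar lam d : 0 < lam < 1 -> (2 <= d)%nat -> Qp lam d (jstar lam d).
Proof.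
  intros Hl Hd.
  assert (Ha : 0 < lam * INR d).
  { assert (2 <= INR d) by (replace 2 with (INR 2) by (simpl; ring); apply le_INR; lia). nra. }
  set (a := lam * INR d) in *.
  assert (HL : 0 < ln (a + 1)) by (rewrite <- ln_1; apply ln_increasing; lra).
  assert (Hl1 : ln (1 - lam) < 0) by (rewrite <- ln_1; apply ln_increasing; lra).
  set (t := - ln (1 - lam) / ln (a + 1)).
  assert (Ht : 0 < t) by (unfold t; apply Rdiv_lt_0_compat; lra).
  destruct (base_Int_part t) as [B1 B2].
  assert (Hz : (0 <= Int_part t)%Z).
  { apply le_IZR. assert (IZR (-1) < IZR (Int_part t)) by (simpl; lra).
    apply lt_IZR in H. apply IZR_le. lia. }
  unfold jstar. fold a. fold t. unfold Qp. fold a.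
  assert (HJ : INR (Z.to_nat (Int_part t)) = IZR (Int_part t)).
  { rewrite INR_IZR_INZ. rewrite Z2Nat.id by lia. reflexivity. }
  set (J := Z.to_nat (Int_part t)) in *.
  assert (Hpos : forall n, 0 < (1 + a) ^ n * (1 - lam)).
  { intros. apply Rmult_lt_0_compat. apply pow_lt; lra. lra. }
  assert (Hln : forall n, ln ((1 + a) ^ n * (1 - lam)) = INR n * ln (a + 1) + ln (1 - lam)).
  { intros. rewrite ln_mult by (try apply pow_lt; lra). rewrite ln_pow by lra.
    replace (1 + a) with (a + 1) by ring. reflexivity. }
  assert (Htl : t * ln (a + 1) = - ln (1 - lam)) by (unfold t; field; lra).
  split.
  - rewrite <- (exp_ln _ (Hpos J)). rewrite Hln.
    assert (IZR (Int_part t) * ln (a + 1) <= t * ln (a + 1)) by (apply Rmult_le_compat_r; lra).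
    assert (Hq : INR J * ln (a + 1) + ln (1 - lam) <= 0) by (rewrite HJ; lra).
    assert (exp (INR J * ln (a + 1) + ln (1 - lam)) <= exp 0).
    { destruct (Rle_lt_or_eq_dec _ _ Hq) as [Hq'|Hq']. apply Rlt_le; apply exp_increasing; auto. rewrite Hq'; apply Rle_refl. }
    rewrite exp_0 in H0. exact H0.
  - rewrite <- (exp_ln _ (Hpos (S J))). rewrite Hln.
    assert (t * ln (a + 1) < (IZR (Int_part t) + 1) * ln (a + 1)) by (apply Rmult_lt_compat_r; lra).
    assert (exp 0 < exp (INR (S J) * ln (a + 1) + ln (1 - lam))).
    { apply exp_increasing. rewrite S_INR, HJ. lra. }
    rewrite exp_0 in H0. exact H0.
Qed.

Lemma div_of a x b : 0 < a -> a * x = b -> x = b / a.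
Proof. intros Ha H. rewrite <- H. field. lra. Qed.

Lemma mono_g a u0 m r1 r2 : 0 < a -> 0 < u0 -> 0 <= r1 -> 0 <= r2 ->
  (1 + r1) * ((a + r1) * (1 + a + r1) ^ (m - 1) * u0) = (1 + r2) * ((a + r2) * (1 + a + r2) ^ (m - 1) * u0) -> r1 = r2.
Proof.
  intros Ha Hu H1 H2 Heq.
  assert (forall p q, 0 <= p -> p < q ->
    (1 + p) * ((a + p) * (1 + a + p) ^ (m - 1) * u0) < (1 + q) * ((a + q) * (1 + a + q) ^ (m - 1) * u0)).
  { intros p q Hp Hpq.
    assert (HP : (1+a+p)^(m-1) <= (1+a+q)^(m-1)) by (apply pow_incr; lra).
    assert (HP0 : 0 < (1+a+p)^(m-1)) by (apply pow_lt; lra).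
    assert (HA : (1+p)*(a+p) < (1+q)*(a+q)) by nra.
    assert (HA0 : 0 < (1+p)*(a+p)) by nra.
    assert (HB : (1+p)*(a+p) * (1+a+p)^(m-1) < (1+q)*(a+q) * (1+a+q)^(m-1)).
    { apply Rlt_le_trans with ((1+q)*(a+q) * (1+a+p)^(m-1)).
      apply Rmult_lt_compat_r; auto. apply Rmult_le_compat_l; nra. }
    replace ((1 + p) * ((a + p) * (1 + a + p) ^ (m - 1) * u0)) with ((1+p)*(a+p) * (1+a+p)^(m-1) * u0) by ring.
    replace ((1 + q) * ((a + q) * (1 + a + q) ^ (m - 1) * u0)) with ((1+q)*(a+q) * (1+a+q)^(m-1) * u0) by ring.
    apply Rmult_lt_compat_r; auto. }
  destruct (Rtotal_order r1 r2) as [Hlt|[Heq'|Hgt]]; auto.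
  - pose proof (H r1 r2 H1 Hlt). lra.
  - pose proof (H r2 r1 H2 Hgt). lra.
Qed.

Lemma r_exists a u0 v0 m : 0 < a -> 0 < u0 -> 0 <= v0 ->
  exists r, 0 <= r /\ (1 + r) * ((a + r) * (1 + a + r) ^ (m - 1) * u0) = a * (1 + a) ^ (m - 1) * (u0 + (1 + a) * v0).
Proof.
  intros Ha Hu Hv.
  set (T := a * (1 + a) ^ (m - 1) * (u0 + (1 + a) * v0)).
  set (f := fun r => (1 + r) * ((a + r) * (1 + a + r) ^ (m - 1) * u0) - T).
  assert (Hc : continuity f) by (unfold f; reg).
  assert (HT : 0 <= T) by (unfold T; apply Rmult_le_pos; [apply Rmult_le_pos; [lra| apply pow_le; lra] | nra]).
  set (R0 := T / (a * u0)).
  assert (HR0 : 0 <= R0) by (unfold R0; apply Rmult_le_pos; auto; left; apply Rinv_0_lt_compat; nra).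
  assert (Hf0 : f 0 <= 0).
  { unfold f, T. replace (1 + 0) with 1 by ring. replace (a + 0) with a by ring. replace (1 + a + 0) with (1 + a) by ring.
    assert (0 <= a * (1 + a) ^ (m - 1) * ((1 + a) * v0)).
    { apply Rmult_le_pos; [apply Rmult_le_pos; [lra| apply pow_le; lra] | nra]. }
    lra. }
  assert (Hf1 : 0 <= f R0).
  { unfold f. assert (1 <= (1 + a + R0) ^ (m - 1)) by (apply pow_R1_Rle; lra).
    assert (R0 * (a * u0) = T) by (unfold R0; field; nra).
    assert ((a + R0) * (1 + a + R0) ^ (m - 1) * u0 >= a * u0).
    { assert ((a + R0) * u0 >= a * u0) by nra.
      assert ((a + R0) * u0 * (1 + a + R0) ^ (m - 1) >= (a + R0) * u0 * 1).
      { apply Rle_ge, Rmult_le_compat_l; nra. }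
      nra. }
    nra. }
  destruct (IVT_cor f 0 R0 Hc HR0 ltac:(nra)) as [r [Hr Hfr]].
  exists r. split. lra. unfold f in Hfr. lra.
Qed.

Theorem theorem2 (lam : R) (d I : nat)
  (Hlam : 0 < lam < 1) (Hd : (2 <= d)%nat) (HI : (1 < I)%nat)
  (HIj : (jstar lam d < I)%nat) :
  exists xs : state,
    fixed_point lam d I xs /\
    (forall y : state, fixed_point lam d I y ->
       forall i j : nat, (i <= j <= I)%nat -> y i j = xs i j) /\
    col xs (jstar lam d) + col xs (S (jstar lam d)) = 1 /\
    (forall i j : nat, (i <= j <= I)%nat ->
       j <> jstar lam d -> j <> S (jstar lam d) -> xs i j = 0) /\
    lam * INR d * xs 0%nat (jstar lam d) =
      (1 + lam * INR d) * (1 - lam) - 1 / (1 + lam * INR d) ^ (jstar lam d) /\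
    xs 0%nat (jstar lam d) + xs 0%nat (S (jstar lam d)) = 1 - lam.
Proof.
  pose proof (Q_jstar lam d Hlam Hd) as HQ.
  set (J := jstar lam d) in *.
  assert (Ha : 0 < lam * INR d).
  { assert (2 <= INR d) by (replace 2 with (INR 2) by (simpl; ring); apply le_INR; lia). nra. }
  assert (Hcls : forall y, fixed_point lam d I y ->
     exists m, (m <= I)%nat /\ 0 < col y m /\ (forall j, (j < m)%nat -> col y j = 0) /\
       ((m = 0%nat /\ J = 0%nat) \/ ((1 <= m)%nat /\ (S m <= I)%nat /\ m = J))).
  { intros y [[Hnn Htot] Hdr].
    destruct (exists_m d I y Hd HI Hnn Htot) as [m [Hm [Hcm Hbelow]]].
    exists m. split; auto. split; auto. split; auto.
    destruct (Nat.eq_dec m 0) as [Hm0|Hm0].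
    - left. split; auto. apply (Q_unique lam d); auto.
      pose proof (caseI lam d I y Hlam Hd HI Hnn Hdr Htot m Hm Hcm Hbelow Hm0) as [C1 [C2 [C3 C4]]].
      split; simpl; nra.
    - destruct (Nat.eq_dec m I) as [HmI|HmI].
      + exfalso. pose proof (caseIII lam d I y Hlam Hd HI Hnn Hdr Htot m Hm Hcm Hbelow HmI) as H3.
        destruct HQ as [_ HQ2].
        assert ((1 + lam * INR d) ^ (S J) <= (1 + lam * INR d) ^ m) by (apply Rle_pow; lra || lia).
        assert ((1 + lam * INR d) ^ (S J) * (1 - lam) <= (1 + lam * INR d) ^ m * (1 - lam))
          by (apply Rmult_le_compat_r; lra).
        lra.
      + right. split; [lia|]. split; [lia|].
        pose proof (caseII lam d I y Hlam Hd HI Hnn Hdr Htot m Hm Hcm Hbelow ltac:(lia) ltac:(lia)) as C.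
        cbv zeta in C. destruct C as [_ [Hu0 [Hv0 [Hs [HS _]]]]].
        apply (Q_unique lam d); auto.
        assert (HP : 0 < (1 + lam * INR d) ^ m) by (apply pow_lt; lra).
        split.
        * rewrite <- Hs. rewrite <- HS at 2.
          assert (0 <= (1 + lam * INR d) ^ m * (lam * INR d * y 0%nat (S m))) by (apply Rmult_le_pos; nra).
          nra.
        * simpl. rewrite <- Hs. rewrite <- HS at 1.
          assert (0 < (1 + lam * INR d) ^ m * (lam * INR d * y 0%nat m)) by (apply Rmult_lt_0_compat; nra).
          nra. }
  destruct (Nat.eq_dec J 0) as [HJ0|HJ0].
  -
    assert (HQ0 : 1 < (1 + lam * INR d) * (1 - lam)).
    { destruct HQ as [_ HQ2]. rewrite HJ0 in HQ2. simpl in HQ2. lra. }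
    rewrite HJ0.
    assert (Hnn0 := z_nn lam d I Hlam Hd HI HQ0).
    assert (Hcm0 : 0 < col (xs0 lam d) 0).
    { rewrite z_col0. eapply z_c0; eauto. }
    exists (xs0 lam d). split; [|split; [|split; [|split; [|split]]]].
    + split. split. exact Hnn0. exact (z_tot lam d I Hlam Hd HI HQ0).
      intros i j Hij. exact (EXz_drift lam d I (xs0 lam d) Hlam Hd HI Hnn0 0%nat ltac:(lia) Hcm0 eq_refl eq_refl HQ0 i j Hij).
    + intros y Hfp i j Hij.
      destruct (Hcls y Hfp) as [m [Hm [Hcm [Hbelow [[Hm0 _]|[Hm1 [_ HmJ]]]]]]]; [|lia].
      destruct Hfp as [[Hnn Htot] Hdr].
      pose proof (caseI lam d I y Hlam Hd HI Hnn Hdr Htot m Hm Hcm Hbelow Hm0) as [C1 [C2 [C3 C4]]].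
      destruct (le_lt_dec 2 j).
      * rewrite (supp lam d I y Hlam Hd HI Hnn Hdr m Hm Hcm Hbelow i j Hij) by lia.
        erewrite z_zero; eauto; lia.
      * destruct i as [|[|i]]; destruct j as [|[|j]]; try lia; simpl.
        -- assert (y 0%nat 1%nat = lam / (lam * INR d)) by (apply div_of; auto). lra.
        -- apply div_of; auto.
        -- auto.
    + unfold col. rewrite rsum_single, rsum_last, rsum_single by lia. simpl. field.
      split; intro HH; rewrite HH in *; lra.
    + intros i j Hij H0 H1. eapply z_zero; eauto; lia.
    + simpl. field. split; intro HH; rewrite HH in *; lra.
    + simpl. field. split; intro HH; rewrite HH in *; lra.
  -
    destruct HQ as [HQ1 HQ2].
    assert (HP : 0 < (1 + lam * INR d) ^ J) by (apply pow_lt; lra).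
    set (S0 := / (1 + lam * INR d) ^ J).
    assert (HS0 : (1 + lam * INR d) ^ J * S0 = 1) by (unfold S0; field; repeat split; intro HH; nra).
    set (v0s := (S0 - (1 - lam)) / (lam * INR d)).
    set (u0s := 1 - lam - v0s).
    assert (Hav : lam * INR d * v0s = S0 - (1 - lam)) by (unfold v0s; field; repeat split; intro HH; nra).
    assert (HS0ge : 1 - lam <= S0).
    { apply (Rmult_le_reg_l ((1 + lam * INR d) ^ J)); auto. lra. }
    assert (HS0lt : S0 < (1 + lam * INR d) * (1 - lam)).
    { apply (Rmult_lt_reg_l ((1 + lam * INR d) ^ J)); auto. rewrite HS0. simpl in HQ2. lra. }
    assert (Hv0 : 0 <= v0s) by (unfold v0s; apply Rmult_le_pos; [lra| left; apply Rinv_0_lt_compat; lra]).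
    assert (Hu0 : 0 < u0s).
    { unfold u0s. apply (Rmult_lt_reg_l (lam * INR d)); auto. rewrite Rmult_0_r.
      replace (lam * INR d * (1 - lam - v0s)) with (lam * INR d * (1 - lam) - lam * INR d * v0s) by ring.
      rewrite Hav. lra. }
    assert (Hsum : u0s + v0s = 1 - lam) by (unfold u0s; ring).
    assert (HS : (1 + lam * INR d) ^ J * (u0s + (1 + lam * INR d) * v0s) = 1).
    { replace (u0s + (1 + lam * INR d) * v0s) with (1 - lam + lam * INR d * v0s) by (unfold u0s; ring).
      rewrite Hav. replace (1 - lam + (S0 - (1 - lam))) with S0 by ring. auto. }
    destruct (r_exists (lam * INR d) u0s v0s J Ha Hu0 Hv0) as [r [Hr Hreq]].
    assert (Hreq' : (1 + r) * ((lam * INR d + r) * (1 + lam * INR d + r) ^ (J - 1) * u0s) =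
      lam * INR d * (1 + lam * INR d) ^ (J - 1) * (u0s + (1 + lam * INR d) * v0s)) by exact Hreq.
    assert (Ex1 : (1 <= J)%nat) by lia.
    assert (ExI : (S J <= I)%nat) by lia.
    set (xs := xsJ (lam * INR d) r u0s v0s J).
    assert (Hnn1 : forall i j, (i <= j <= I)%nat -> 0 <= xs i j).
    { intros i j Hij. exact (ex_xs_nn lam d I J u0s v0s r Hlam Hd Ex1 ExI Hu0 Hv0 Hr Hreq' i j Hij). }
    assert (Hcm1 : 0 < col xs J) by exact (ex_col_pos lam d I J u0s v0s r Hlam Hd Ex1 ExI Hu0 Hr).
    assert (Hbl1 : forall j, (j < J)%nat -> col xs j = 0).
    { intros j Hj. exact (ex_col_below lam d I J u0s v0s r Hd Ex1 ExI j Hj). }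
    assert (Hxm : forall i, (i <= J)%nat -> xs i J = useq (lam * INR d) r u0s i).
    { intros i Hi. exact (ex_xs_m lam d J u0s v0s r i Hi). }
    assert (HxSm : forall i, (i <= S J)%nat -> xs i (S J) = vseq (lam * INR d) r u0s v0s i).
    { intros i Hi. exact (ex_xs_Sm lam d I J u0s v0s r Hd Ex1 ExI i Hi). }
    assert (Hx0 : forall i j, j <> J -> j <> S J -> xs i j = 0).
    { intros i j H1 H2. exact (ex_xs_0 lam d I J u0s v0s r Hd Ex1 ExI i j H1 H2). }
    exists xs. split; [|split; [|split; [|split; [|split]]]].
    + split. split. exact Hnn1. exact (ex_tot lam d I J u0s v0s r Hd Ex1 ExI HS).
      intros i j Hij.
      exact (EX_drift lam d I xs Hlam Hd HI Hnn1 J ltac:(lia) Hcm1 Hbl1 u0s v0s r Ex1 ExI Hu0 Hv0 Hr Hsum HS Hreq' eq_refl i j Hij).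
    + intros y Hfp i j Hij.
      destruct (Hcls y Hfp) as [m [Hm [Hcm [Hbelow [[Hm0 HJ0']|[Hm1 [HmI HmJ]]]]]]]; [lia|].
      destruct Hfp as [[Hnn Htot] Hdr].
      pose proof (caseII lam d I y Hlam Hd HI Hnn Hdr Htot m Hm Hcm Hbelow Hm1 HmI) as C.
      cbv zeta in C. destruct C as [Hry [Hu0y [Hv0y [Hsy [HSy [Hreqy [Huy Hvy]]]]]]].
      pose proof (supp lam d I y Hlam Hd HI Hnn Hdr m Hm Hcm Hbelow) as Hsupp.
      subst m.
      assert (Ev : y 0%nat (S J) = v0s).
      { unfold v0s. apply div_of; auto.
        apply (Rmult_eq_reg_l ((1 + lam * INR d) ^ J)); [|lra].
        rewrite Rmult_minus_distr_l. rewrite HS0.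
        assert (HH : (1 + lam * INR d) ^ J * (y 0%nat J + y 0%nat (S J)) = (1 + lam * INR d) ^ J * (1 - lam)) by (rewrite Hsy; reflexivity).
        lra. }
      assert (Eu : y 0%nat J = u0s) by (unfold u0s; lra).
      rewrite Eu, Ev in Hreqy.
      assert (Er : rr lam d I y J = r).
      { apply (mono_g (lam * INR d) u0s J); auto. rewrite Hreqy. symmetry. exact Hreq'. }
      rewrite Er, Eu in Huy. rewrite Er, Eu, Ev in Hvy.
      destruct (Nat.eq_dec j J) as [HjJ|HjJ].
      * subst j. rewrite Huy by lia. rewrite Hxm by lia. reflexivity.
      * destruct (Nat.eq_dec j (S J)) as [HjS|HjS].
        -- subst j. rewrite Hvy by lia. rewrite HxSm by lia. reflexivity.
        -- rewrite Hsupp by auto. rewrite Hx0 by auto. reflexivity.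
    + unfold xs. rewrite (ex_col_m lam d I J u0s v0s r Hd Ex1 ExI). rewrite (ex_col_Sm lam d I J u0s v0s r Hd Ex1 ExI).
      exact (ex_tot_cols lam d I J u0s v0s r Hd Ex1 ExI HS).
    + intros i j Hij H1 H2. apply Hx0; auto.
    + rewrite Hxm by lia. simpl.
      replace (1 / (1 + lam * INR d) ^ J) with S0 by (unfold S0; field; repeat split; intro HH; nra).
      unfold u0s. rewrite Rmult_minus_distr_l. rewrite Hav. ring.
    + rewrite Hxm, HxSm by lia. simpl. exact Hsum.
Qed.
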